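(* A (horizontal or vertical) chute move sends a $\mathbf{u}$-compatible subset of $L$ to a $\mathbf{u}$-compatible subset of $L$. In particular it sends a concurrent vertex map $C$ to a concurrent vertex map $C'$ with $C'<_TC$. The analogous statement holds for an inverse (horizontal or vertical) chute move, except that then $C'>_TC$.
   Context: Let $\mathcal{Q}$ be a bipartite quiver with vertex set $V_{\mathcal{Q}}=V_{\rm source}\sqcup V_{\rm target}$ and arrows $h_1,\dots,h_r$, each $h_k$ from $\mathrm{s}(h_k)\in V_{\rm source}$ to $\mathrm{t}(h_k)\in V_{\rm target}$. Let $\mathbf{m}=(m_\gamma)$, $\mathbf{u}=(u_\gamma)$ be tuples of nonnegative integers indexed by $V_{\mathcal{Q}}$. For $k=1,\dots,r$ let $X^{(k)}$ be an $m_{\mathrm{t}(h_k)}\times m_{\mathrm{s}(h_k)}$ matrix of variables $x^{(k)}_{ij}$. For $\alpha\in V_{\rm target}$ with $r_1<\dots<r_s$ the indices of arrows with target $\alpha$, $A_\alpha=[X^{(r_1)}|\cdots|X^{(r_s)}]$; for $\beta\in V_{\rm source}$ with $r'_1<\dots<r'_t$ the indices of arrows with source $\beta$, $A_\beta$ is the stack of $X^{(r'_1)},\dots,X^{(r'_t)}$ top to bottom. $a_\gamma\times b_\gamma$ is the size of $A_\gamma$; $v_\alpha=\sum_{k:\mathrm{t}(h_k)=\alpha}u_{\mathrm{s}(h_k)}$, $v_\beta=\sum_{k:\mathrm{s}(h_k)=\beta}u_{\mathrm{t}(h_k)}$. Standing assumption: $0<u_\gamma\le\min(a_\gamma,b_\gamma)$,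 $u_\alpha\le v_\alpha$, $u_\beta\le v_\beta$. $L=\{(i,j,k):1\le k\le r,1\le i\le m_{\mathrm{t}(h_k)},1\le j\le m_{\mathrm{s}(h_k)}\}$; $\phi_\gamma$ sends a position $(p,q)$ of $A_\gamma$ to $(i,j,k)$ if that entry is $x^{(k)}_{ij}$; $D^\gamma=\phi_\gamma^{-1}(D)$. Coordinates $(i,j)$: $i$ row (downward), $j$ column (rightward). Diagonal chain of size $s$: $\{(i_1,j_1),\dots,(i_s,j_s)\}$ with $i_1<\dots<i_s$, $j_1<\dots<j_s$. $D\subseteq L$ is $\mathbf{u}$-compatible if no $D^\gamma$ contains a diagonal chain of size $u_\gamma+1$; a concurrent vertex map is a maximal (under inclusion) $\mathbf{u}$-compatible subset; all have the same cardinality. Chute moves on $D\subseteq L$: for $\alpha\in V_{\rm target}$, a horizontal chutable rectangle is $[i,i+1]\times[j,j+r-1]$ inside the grid of $A_\alpha$, $r\ge2$, with $D^\alpha\cap([i,i+1]\times[j,j+r-1])=\{(i+1,j),(i,j+r-1),(i+1,j+r-1)\}$; the horizontal chute move replaces $D$ by $D\cup\{\phi_\alpha(i,j)\}\setminus\{\phi_\alpha(i+1,j+r-1)\}$. For $\beta\in V_{\rm source}$, a vertical chutable rectangle is $[i,i+r-1]\times[j,j+1]$ inside the grid of $A_\beta$, $r\ge2$, with $D^\beta\cap$ it $=\{(i+r-1,j),(i,j+1),(i+r-1,j+1)\}$; the vertical chute move replaces $D$ by $D\cup\{\phi_\beta(i,j)\}\setminus\{\phi_\beta(i+r-1,j+1)\}$.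 An inverse chute move is the reverse of a chute move: if $D\to D'$ is a chute move then $D'\dashrightarrow D$ is an inverse chute move. Order: $(i,j,k)<_T(i',j',k')$ iff $k<k'$, or $k=k'$, $i<i'$, or $k=k'$, $i=i'$, $j<j'$. For concurrent vertex maps $C=\{P_1<_T\dots<_TP_N\}$, $C'=\{P'_1<_T\dots<_TP'_N\}$: $C<_TC'$ iff there is $t$ with $P_t<_TP'_t$ and $P_s=P'_s$ for all $s>t$. *)

(* Defs.v *)
From HB Require Import structures.
From mathcomp Require Import all_boot all_order.
From mathcomp Require Import finmap.
Set Implicit Arguments. Unset Strict Implicit. Unset Printing Implicit Defensive.
Local Open Scope fset_scope.

(* Conventions: all indices are 0-based (rows, columns, arrow indices).
   Arrows h_1..h_r are indexed by k : 'I_r (order preserved). *)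

Section Quiver.
Variables (VS VT : finType) (r : nat) (src : 'I_r -> VS) (tgt : 'I_r -> VT)
          (mS : VS -> nat) (mT : VT -> nat).

(* an element (i,j,k) of L, i.e. the variable x^{(k)}_{ij} *)
Definition pos := (nat * nat * 'I_r)%type.

Definition inL (P : pos) : bool :=
  let: (i, j, k) := P in (i < mT (tgt k)) && (j < mS (src k)).

(* ---------- target vertex alpha: A_alpha = [X^(r1) | ... | X^(rs)] ---------- *)
Definition off_tgt (k : 'I_r) : nat :=
  \sum_(k' < r | (k' < k) && (tgt k' == tgt k)) mS (src k').
Definition rows_tgt (a : VT) : nat := mT a.
Definition cols_tgt (a : VT) : nat := \sum_(k < r | tgt k == a) mS (src k).

Definition phi_tgt (a : VT) (pq : nat * nat) : option pos :=
  let: (p, q) := pq in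
  match [pick k : 'I_r | (tgt k == a) && (off_tgt k <= q < off_tgt k + mS (src k))] with
  | Some k => Some (p, q - off_tgt k, k)
  | None => None
  end.

(* ---------- source vertex beta: A_beta = stack of X^(r'1), ..., X^(r't) ---------- *)
Definition off_src (k : 'I_r) : nat :=
  \sum_(k' < r | (k' < k) && (src k' == src k)) mT (tgt k').
Definition rows_src (b : VS) : nat := \sum_(k < r | src k == b) mT (tgt k).
Definition cols_src (b : VS) : nat := mS b.

Definition phi_src (b : VS) (pq : nat * nat) : option pos :=
  let: (p, q) := pq in
  match [pick k : 'I_r | (src k == b) && (off_src k <= p < off_src k + mT (tgt k))] with
  | Some k => Some (p - off_src k, q, k)
  | None => None
  end.

Definition in_opt (D : {fset pos}) (o : option pos) : bool :=
  if o is Some P then P \in D else false.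

Definition Dtgt (a : VT) (D : {fset pos}) : pred (nat * nat) :=
  fun pq => [&& pq.1 < rows_tgt a, pq.2 < cols_tgt a & in_opt D (phi_tgt a pq)].
Definition Dsrc (b : VS) (D : {fset pos}) : pred (nat * nat) :=
  fun pq => [&& pq.1 < rows_src b, pq.2 < cols_src b & in_opt D (phi_src b pq)].

Definition has_diag_chain (S : pred (nat * nat)) (n : nat) : Prop :=
  exists c : seq (nat * nat),
    [/\ size c = n, all S c &
        sorted (fun x y => (x.1 < y.1) && (x.2 < y.2)) c].

Variables (uS : VS -> nat) (uT : VT -> nat).

Definition v_tgt (a : VT) : nat := \sum_(k < r | tgt k == a) uS (src k).
Definition v_src (b : VS) : nat := \sum_(k < r | src k == b) uT (tgt k).

Definition u_compatible (D : {fset pos}) : Prop :=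
  [/\ (forall P, P \in D -> inL P),
      (forall a, ~ has_diag_chain (Dtgt a D) (uT a).+1) &
      (forall b, ~ has_diag_chain (Dsrc b D) (uS b).+1)].

Definition concurrent_vertex_map (C : {fset pos}) : Prop :=
  u_compatible C /\ (forall D, u_compatible D -> C `<=` D -> D = C).

Definition horizontal_chute (D D' : {fset pos}) : Prop :=
  exists (a : VT) (i j l : nat),
    [/\ 2 <= l, i.+1 < rows_tgt a, j + l - 1 < cols_tgt a,
        (forall p q, i <= p <= i.+1 -> j <= q <= j + l - 1 ->
           Dtgt a D (p, q) = ((p, q) \in [:: (i.+1, j); (i, j + l - 1); (i.+1, j + l - 1)])) &
        exists P Q, [/\ phi_tgt a (i, j) = Some P,
                        phi_tgt a (i.+1, j + l - 1) = Some Q &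
                        D' = (D `|` [fset P]) `\ Q]].

Definition vertical_chute (D D' : {fset pos}) : Prop :=
  exists (b : VS) (i j l : nat),
    [/\ 2 <= l, i + l - 1 < rows_src b, j.+1 < cols_src b,
        (forall p q, i <= p <= i + l - 1 -> j <= q <= j.+1 ->
           Dsrc b D (p, q) = ((p, q) \in [:: (i + l - 1, j); (i, j.+1); (i + l - 1, j.+1)])) &
        exists P Q, [/\ phi_src b (i, j) = Some P,
                        phi_src b (i + l - 1, j.+1) = Some Q &
                        D' = (D `|` [fset P]) `\ Q]].

Definition chute_move (D D' : {fset pos}) : Prop :=
  horizontal_chute D D' \/ vertical_chute D D'.

Definition inverse_chute_move (D D' : {fset pos}) : Prop := chute_move D' D.

Definition ltT (P Q : pos) : bool :=
  let: (i, j, k) := P in let: (i', j', k') := Q in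
  [|| (k < k')%N, (k == k') && (i < i') | [&& k == k', i == i' & j < j'] ].
Definition leT (P Q : pos) : bool := (P == Q) || ltT P Q.

(* C <_T C' : with C = {P_1 <_T .. <_T P_N}, C' = {P'_1 <_T .. <_T P'_N},
   there is t with P_t <_T P'_t and P_s = P'_s for all s > t *)
Definition ltT_map (C C' : {fset pos}) : Prop :=
  let s := sort leT C in let s' := sort leT C' in
  exists (t : nat) (x y : pos) (rest : seq pos),
    [/\ ltT x y, drop t s = x :: rest & drop t s' = y :: rest].

End Quiver.

(* Main.v *)
Require Import Defs.
From HB Require Import structures.
From mathcomp Require Import all_boot all_order.
From mathcomp Require Import finmap.
From mathcomp Require Import zify.
Set Implicit Arguments. Unset Strict Implicit. Unset Printing Implicit Defensive.

Module ModA.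


Definition ltc (x y : nat * nat) : bool := (x.1 < y.1) && (x.2 < y.2).

Lemma ltc_trans : transitive ltc.
Proof. move=> y x z /andP[h1 h2] /andP[h3 h4]; apply/andP; split; lia. Qed.

Lemma ltc_irr : irreflexive ltc.
Proof. move=> x; rewrite /ltc; lia. Qed.

Lemma chainE (S : pred (nat*nat)) n :
  has_diag_chain S n <-> exists c, [/\ size c = n, all S c & pairwise ltc c].
Proof.
rewrite /has_diag_chain; split=> -[c [h1 h2 h3]]; exists c; split => //.
  by rewrite -sorted_pairwise; [exact: h3 | exact: ltc_trans].
by rewrite (@sorted_pairwise _ ltc) //; exact: ltc_trans.
Qed.

Lemma chain_mono (S T : pred (nat*nat)) n :
  (forall z, T z -> S z) -> has_diag_chain T n -> has_diag_chain S n.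
Proof.
move=> hTS /chainE [c [h1 h2 h3]]; apply/chainE; exists c; split => //.
by apply/allP => z /(allP h2) /hTS.
Qed.

Lemma pairwise_cmp (c : seq (nat*nat)) z z' : pairwise ltc c -> z \in c -> z' \in c ->
  [\/ z = z', ltc z z' | ltc z' z].
Proof.
elim: c => // x c IH /= /andP[hx hc]; rewrite !inE => /orP[/eqP->|hz] /orP[/eqP->|hz'].
- by apply: Or31.
- by apply: Or32; apply: (allP hx).
- by apply: Or33; apply: (allP hx).
- exact: IH.
Qed.

Lemma chain_replace (S T : pred (nat*nat)) x0 n :
  has_diag_chain T n ->
  (forall z, T z -> z != x0 -> S z) ->
  (forall c1 c2, pairwise ltc (c1 ++ x0 :: c2) -> all T (c1 ++ x0 :: c2) ->
     size (c1 ++ x0 :: c2) = n ->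
     exists y, [/\ S y, (forall z, z \in c1 -> ltc z y) & (forall z, z \in c2 -> ltc y z)]) ->
  has_diag_chain S n.
Proof.
move=> /chainE [c [hs hT hp]] hTS hrep; apply/chainE.
have uc : uniq c by apply: pairwise_uniq hp; exact: ltc_irr.
case: (boolP (x0 \in c)) => hx; last first.
  exists c; split => //; apply/allP => z hz; apply: hTS; first exact: (allP hT).
  by apply: contraNneq hx => <-.
case/splitPr: hx hs hT hp uc => c1 c2 hs hT hp uc.
have [y [Sy h1 h2]] := hrep c1 c2 hp hT hs.
exists (c1 ++ y :: c2); split.
- by rewrite -hs !size_cat.
- have [hb ha] : (forall z, z \in c1 -> ltc z x0) /\ (forall z, z \in c2 -> ltc x0 z).
    move: hp; rewrite pairwise_cat /= => /and3P[/allrelP a1 _ /andP[a2 _]].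
    split=> z hz; first by apply: a1; rewrite // inE eqxx.
    exact: (allP a2).
  rewrite all_cat /= Sy /=; move: hT; rewrite all_cat /= => /and3P[a1 _ a2].
  apply/andP; split; apply/allP => z hz.
    apply: hTS; first exact: (allP a1). by apply: contraTneq (hb _ hz) => ->; rewrite ltc_irr.
  apply: hTS; first exact: (allP a2). by apply: contraTneq (ha _ hz) => ->; rewrite ltc_irr.
- move: hp; rewrite !pairwise_cat /= => /and3P[a1 p1 /andP[a2 p2]].
  rewrite p1 p2 andbT /=; apply/andP; split.
    apply/allrelP => z w hz; rewrite inE => /orP[/eqP->|hw]; first exact: h1.
    exact: ltc_trans (h1 _ hz) (h2 _ hw).
  by apply/allP => w hw; apply: h2.
Qed.

Lemma chain_split (c1 c2 : seq (nat*nat)) x0 : pairwise ltc (c1 ++ x0 :: c2) ->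
  [/\ forall z, z \in c1 -> ltc z x0, forall z, z \in c2 -> ltc x0 z,
      forall z z', z \in c1 -> z' \in c1 -> [\/ z = z', ltc z z' | ltc z' z] &
      forall z z', z \in c2 -> z' \in c2 -> [\/ z = z', ltc z z' | ltc z' z]].
Proof.
rewrite pairwise_cat /= => /and3P[/allrelP a1 p1 /andP[a2 p2]]; split.
- by move=> z hz; apply: a1; rewrite // inE eqxx.
- by move=> z hz; apply: (allP a2).
- by move=> z z'; apply: pairwise_cmp.
- by move=> z z'; apply: pairwise_cmp.
Qed.

Lemma all_split (T : pred (nat*nat)) c1 c2 x0 : all T (c1 ++ x0 :: c2) ->
  [/\ forall z, z \in c1 -> T z, T x0 & forall z, z \in c2 -> T z].
Proof.
rewrite all_cat /= => /and3P[a1 h a2]; split => // z hz; [exact: (allP a1) | exact: (allP a2)].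
Qed.

Lemma chain_of (S : pred (nat*nat)) c n : pairwise ltc c -> all S c -> size c = n -> has_diag_chain S n.
Proof. by move=> h1 h2 h3; apply/chainE; exists c. Qed.

Lemma same_row (c : seq (nat*nat)) z1 z2 : pairwise ltc c -> z1 \in c -> z2 \in c -> z1.1 = z2.1 -> z1 = z2.
Proof.
move=> hp h1 h2 e; case: (pairwise_cmp hp h1 h2) => //; rewrite /ltc e ltnn //.
Qed.

End ModA.
Import ModA.

Module ModB.


Lemma sum_sub r (P1 P2 : pred 'I_r) (F : 'I_r -> nat) :
  (forall k, P1 k -> P2 k) -> \sum_(k < r | P1 k) F k <= \sum_(k < r | P2 k) F k.
Proof.
move=> h; rewrite (big_mkcond P1) (big_mkcond P2) /=; apply: leq_sum => k _.
by case: (boolP (P1 k)) => [/h ->|_] //; case: ifP.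
Qed.

Section Q.
Variables (VS VT : finType) (r : nat) (src : 'I_r -> VS) (tgt : 'I_r -> VT)
          (mS : VS -> nat) (mT : VT -> nat).

Local Notation offT := (off_tgt src tgt mS).
Local Notation offS := (off_src src tgt mT).

Lemma offT_lt k1 k2 : tgt k1 = tgt k2 -> k1 < k2 -> offT k1 + mS (src k1) <= offT k2.
Proof.
move=> e lt; rewrite [offT k2]/off_tgt (bigD1 k1) /=; last by rewrite lt e eqxx.
rewrite addnC leq_add2l; apply: sum_sub => k /andP[h1 /eqP h2].
rewrite (ltn_trans h1 lt) h2 e eqxx /=; apply: contraTneq h1 => ->; by rewrite ltnn.
Qed.

Lemma offT_cols k : offT k + mS (src k) <= cols_tgt src tgt mS (tgt k).
Proof.
rewrite /cols_tgt (bigD1 k) //= addnC leq_add2l; apply: sum_sub => k' /andP[h1 h2].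
rewrite h2 /=; apply: contraTneq h1 => ->; by rewrite ltnn.
Qed.

Lemma offS_lt k1 k2 : src k1 = src k2 -> k1 < k2 -> offS k1 + mT (tgt k1) <= offS k2.
Proof.
move=> e lt; rewrite [offS k2]/off_src (bigD1 k1) /=; last by rewrite lt e eqxx.
rewrite addnC leq_add2l; apply: sum_sub => k /andP[h1 /eqP h2].
rewrite (ltn_trans h1 lt) h2 e eqxx /=; apply: contraTneq h1 => ->; by rewrite ltnn.
Qed.

Lemma offS_rows k : offS k + mT (tgt k) <= rows_src src tgt mT (src k).
Proof.
rewrite /rows_src (bigD1 k) //= addnC leq_add2l; apply: sum_sub => k' /andP[h1 h2].
rewrite h2 /=; apply: contraTneq h1 => ->; by rewrite ltnn.
Qed.

Lemma blockT_uniq k1 k2 q : tgt k1 = tgt k2 ->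
  offT k1 <= q < offT k1 + mS (src k1) -> offT k2 <= q < offT k2 + mS (src k2) -> k1 = k2.
Proof.
move=> e h1 h2; case: (ltngtP k1 k2) => [lt|lt|/val_inj //].
  have := offT_lt e lt; lia.
have := offT_lt (esym e) lt; lia.
Qed.

Lemma blockS_uniq k1 k2 p : src k1 = src k2 ->
  offS k1 <= p < offS k1 + mT (tgt k1) -> offS k2 <= p < offS k2 + mT (tgt k2) -> k1 = k2.
Proof.
move=> e h1 h2; case: (ltngtP k1 k2) => [lt|lt|/val_inj //].
  have := offS_lt e lt; lia.
have := offS_lt (esym e) lt; lia.
Qed.

Lemma phiT_eq k p q : offT k <= q < offT k + mS (src k) ->
  phi_tgt src tgt mS (tgt k) (p, q) = Some (p, q - offT k, k).
Proof.
move=> h; rewrite /phi_tgt; case: pickP => [k' /andP[/eqP e h']|/(_ k)].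
  by rewrite (blockT_uniq e h' h).
by rewrite eqxx h.
Qed.

Lemma phiT_Some a p q P : phi_tgt src tgt mS a (p, q) = Some P ->
  exists k, [/\ tgt k = a, offT k <= q < offT k + mS (src k) & P = (p, q - offT k, k)].
Proof.
rewrite /phi_tgt; case: pickP => // k /andP[/eqP e h] [<-]; by exists k.
Qed.

Lemma phiS_eq k p q : offS k <= p < offS k + mT (tgt k) ->
  phi_src src tgt mT (src k) (p, q) = Some (p - offS k, q, k).
Proof.
move=> h; rewrite /phi_src; case: pickP => [k' /andP[/eqP e h']|/(_ k)].
  by rewrite (blockS_uniq e h' h).
by rewrite eqxx h.
Qed.

Lemma phiS_Some b p q P : phi_src src tgt mT b (p, q) = Some P ->
  exists k, [/\ src k = b, offS k <= p < offS k + mT (tgt k) & P = (p - offS k, q, k)].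
Proof.
rewrite /phi_src; case: pickP => // k /andP[/eqP e h] [<-]; by exists k.
Qed.


Local Notation DT := (Dtgt src tgt mS mT).
Local Notation DS := (Dsrc src tgt mS mT).
Local Notation phT := (phi_tgt src tgt mS).
Local Notation phS := (phi_src src tgt mT).

Lemma DT_pos k p c (E : {fset pos r}) : p < mT (tgt k) -> c < mS (src k) ->
  DT (tgt k) E (p, offT k + c) = ((p, c, k) \in E).
Proof.
move=> hp hc.
have hb : offT k <= offT k + c < offT k + mS (src k) by lia.
rewrite /Dtgt phiT_eq // /= /rows_tgt hp addKn /=.
have -> : (offT k + c < cols_tgt src tgt mS (tgt k)) = true by have := offT_cols k; lia.
done.
Qed.

Lemma DS_pos k p c (E : {fset pos r}) : p < mT (tgt k) -> c < mS (src k) ->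
  DS (src k) E (offS k + p, c) = ((p, c, k) \in E).
Proof.
move=> hp hc.
have hb : offS k <= offS k + p < offS k + mT (tgt k) by lia.
rewrite /Dsrc phiS_eq // /= /cols_src hc addKn /=.
have -> : (offS k + p < rows_src src tgt mT (src k)) = true by have := offS_rows k; lia.
done.
Qed.

Lemma DT_some a (E : {fset pos r}) p q : DT a E (p, q) ->
  exists k c, [/\ tgt k = a, q = offT k + c, c < mS (src k), p < mT a & (p, c, k) \in E].
Proof.
rewrite /Dtgt => /and3P[hp _ hX]; move: hp; rewrite /rows_tgt /= => hp.
case e: (phT a (p, q)) hX => [X|] // hX.
have [k [ek hk eX]] := phiT_Some e; subst X; exists k, (q - offT k); split => //; lia.
Qed.

Lemma DS_some b (E : {fset pos r}) p q : DS b E (p, q) ->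
  exists k c, [/\ src k = b, p = offS k + c, c < mT (tgt k), q < mS b & (c, q, k) \in E].
Proof.
rewrite /Dsrc => /and3P[_ hq hX]; move: hq; rewrite /cols_src /= => hq.
case e: (phS b (p, q)) hX => [X|] // hX.
have [k [ek hk eX]] := phiS_Some e; subst X; exists k, (p - offS k); split => //; lia.
Qed.

Lemma DT_ext a (E E' : {fset pos r}) z :
  (forall X, phT a z = Some X -> (X \in E) = (X \in E')) -> DT a E z = DT a E' z.
Proof.
rewrite /Dtgt; case: (phT a z) => [X|] //= h; by rewrite h.
Qed.

Lemma DS_ext b (E E' : {fset pos r}) z :
  (forall X, phS b z = Some X -> (X \in E) = (X \in E')) -> DS b E z = DS b E' z.
Proof.
rewrite /Dsrc; case: (phS b z) => [X|] //= h; by rewrite h.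
Qed.

Lemma phT_inj a a' z z' X : phT a z = Some X -> phT a' z' = Some X -> a = a' /\ z = z'.
Proof.
case: z => p q; case: z' => p' q' /phiT_Some [k [e1 h1 ->]] /phiT_Some [k' [e2 h2 [e3 e4 e5]]].
subst; split => //; congr pair; lia.
Qed.

Lemma phS_inj b b' z z' X : phS b z = Some X -> phS b' z' = Some X -> b = b' /\ z = z'.
Proof.
case: z => p q; case: z' => p' q' /phiS_Some [k [e1 h1 ->]] /phiS_Some [k' [e2 h2 [e3 e4 e5]]].
subst; split => //; congr pair; lia.
Qed.


Lemma DT_at a (E : {fset pos r}) p q X : phT a (p, q) = Some X -> p < mT a -> DT a E (p, q) = (X \in E).
Proof.
move=> e hp; have [k [ek hk eX]] := phiT_Some e; rewrite /Dtgt e /= /rows_tgt hp /=.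
have := offT_cols k; rewrite ek => hc.
have -> : (q < cols_tgt src tgt mS a) = true by lia.
done.
Qed.

Lemma DS_at b (E : {fset pos r}) p q X : phS b (p, q) = Some X -> q < mS b -> DS b E (p, q) = (X \in E).
Proof.
move=> e hq; have [k [ek hk eX]] := phiS_Some e; rewrite /Dsrc e /= /cols_src hq /=.
have := offS_rows k; rewrite ek => hc.
have -> : (p < rows_src src tgt mT b) = true by lia.
done.
Qed.

Lemma modT_l a (E : {fset pos r}) X Y z : DT a ((E `|` [fset X]) `\ Y)%fset z -> phT a z != Some X -> DT a E z.
Proof.
rewrite /Dtgt; case: (phT a z) => [Z|] //=; rewrite !inE => /and3P[-> -> /andP[_ /orP[->|/eqP ->]]] //.
by rewrite eqxx.
Qed.

Lemma modT_r a (E : {fset pos r}) X Y z : DT a E z -> phT a z != Some Y -> DT a ((E `|` [fset X]) `\ Y)%fset z.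
Proof.
rewrite /Dtgt; case: (phT a z) => [Z|] //=; rewrite !inE => /and3P[-> -> ->] h /=.
by rewrite ?orbT ?andbT; apply: contraNneq h => ->.
Qed.

Lemma modS_l b (E : {fset pos r}) X Y z : DS b ((E `|` [fset X]) `\ Y)%fset z -> phS b z != Some X -> DS b E z.
Proof.
rewrite /Dsrc; case: (phS b z) => [Z|] //=; rewrite !inE => /and3P[-> -> /andP[_ /orP[->|/eqP ->]]] //.
by rewrite eqxx.
Qed.

Lemma modS_r b (E : {fset pos r}) X Y z : DS b E z -> phS b z != Some Y -> DS b ((E `|` [fset X]) `\ Y)%fset z.
Proof.
rewrite /Dsrc; case: (phS b z) => [Z|] //=; rewrite !inE => /and3P[-> -> ->] h /=.
by rewrite ?orbT ?andbT; apply: contraNneq h => ->.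
Qed.


Lemma DT_add a (E : {fset pos r}) X z0 z : phT a z0 = Some X -> z0.1 < mT a ->
  DT a (E `|` [fset X])%fset z = DT a E z || (z == z0).
Proof.
move=> h0 hb; case: (eqVneq z z0) => [->|ne].
  by case: z0 h0 hb => p q h0 hb; rewrite (DT_at _ h0) // !inE eqxx !orbT.
rewrite orbF; apply: DT_ext => Y hY; rewrite !inE.
case: (eqVneq Y X) => [eY|]; last by rewrite orbF.
by subst; have [_ ez] := phT_inj hY h0; rewrite ez eqxx in ne.
Qed.

Lemma DT_add_no a (E : {fset pos r}) X z : phT a z != Some X ->
  DT a (E `|` [fset X])%fset z = DT a E z.
Proof.
move=> h; apply: DT_ext => Y hY; rewrite !inE; case: (eqVneq Y X) => [eY|]; last by rewrite orbF.
by subst; rewrite hY eqxx in h.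
Qed.

Lemma DT_rem a (E : {fset pos r}) X z0 z : phT a z0 = Some X ->
  DT a (E `\ X)%fset z = DT a E z && (z != z0).
Proof.
move=> h0; case: (eqVneq z z0) => [->|ne].
  by rewrite andbF /Dtgt h0 /= !inE eqxx /= !andbF.
rewrite andbT; apply: DT_ext => Y hY; rewrite !inE.
case: (eqVneq Y X) => [eY|] //.
by subst; have [_ ez] := phT_inj hY h0; rewrite ez eqxx in ne.
Qed.

Lemma DS_add b (E : {fset pos r}) X z0 z : phS b z0 = Some X -> z0.2 < mS b ->
  DS b (E `|` [fset X])%fset z = DS b E z || (z == z0).
Proof.
move=> h0 hb; case: (eqVneq z z0) => [->|ne].
  by case: z0 h0 hb => p q h0 hb; rewrite (DS_at _ h0) // !inE eqxx !orbT.
rewrite orbF; apply: DS_ext => Y hY; rewrite !inE.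
case: (eqVneq Y X) => [eY|]; last by rewrite orbF.
by subst; have [_ ez] := phS_inj hY h0; rewrite ez eqxx in ne.
Qed.

Lemma DS_add_no b (E : {fset pos r}) X z : phS b z != Some X ->
  DS b (E `|` [fset X])%fset z = DS b E z.
Proof.
move=> h; apply: DS_ext => Y hY; rewrite !inE; case: (eqVneq Y X) => [eY|]; last by rewrite orbF.
by subst; rewrite hY eqxx in h.
Qed.

Lemma DS_rem b (E : {fset pos r}) X z0 z : phS b z0 = Some X ->
  DS b (E `\ X)%fset z = DS b E z && (z != z0).
Proof.
move=> h0; case: (eqVneq z z0) => [->|ne].
  by rewrite andbF /Dsrc h0 /= !inE eqxx /= !andbF.
rewrite andbT; apply: DS_ext => Y hY; rewrite !inE.
case: (eqVneq Y X) => [eY|] //.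
by subst; have [_ ez] := phS_inj hY h0; rewrite ez eqxx in ne.
Qed.

Variables (uS : VS -> nat) (uT : VT -> nat).
Local Notation comp := (u_compatible src tgt mS mT uS uT).
Local Notation cvm := (concurrent_vertex_map src tgt mS mT uS uT).

Lemma DT_sub a (E F : {fset pos r}) z : (F `<=` E)%fset -> DT a F z -> DT a E z.
Proof.
move=> /fsubsetP h; rewrite /Dtgt; case: (phT a z) => [Y|] //= /and3P[-> -> /h] //.
Qed.

Lemma DS_sub b (E F : {fset pos r}) z : (F `<=` E)%fset -> DS b F z -> DS b E z.
Proof.
move=> /fsubsetP h; rewrite /Dsrc; case: (phS b z) => [Y|] //= /and3P[-> -> /h] //.
Qed.

Lemma comp_sub (E F : {fset pos r}) : comp E -> (F `<=` E)%fset -> comp F.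
Proof.
case=> hL hT hS hFE; split.
- by move=> X /(fsubsetP hFE) /hL.
- move=> a hc; apply: (hT a); apply: chain_mono hc => z; exact: DT_sub.
- move=> b hc; apply: (hS b); apply: chain_mono hc => z; exact: DS_sub.
Qed.

Lemma cvm_max (C : {fset pos r}) R : cvm C -> R \notin C -> ~ comp (C `|` [fset R])%fset.
Proof.
case=> _ hmax hR hc; have := hmax _ hc; rewrite fsubsetUl => /(_ isT) /fsetP /(_ R).
by rewrite !inE eqxx orbT (negbTE hR).
Qed.

Lemma cvm_intro (C : {fset pos r}) : comp C ->
  (forall R, R \notin C -> ~ comp (C `|` [fset R])%fset) -> cvm C.
Proof.
move=> hc hR; split => // E hE hCE; apply/fsetP => x; apply/idP/idP; last exact: (fsubsetP hCE).
move=> hx; apply/negPn/negP => hn; apply: (hR x hn); apply: comp_sub hE _.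
by apply/fsubsetP => y; rewrite !inE => /orP[/(fsubsetP hCE)|/eqP ->].
Qed.

End Q.

Lemma pos_neq1 r (x y : pos r) : x.1.1 != y.1.1 -> (x == y) = false.
Proof. by apply: contraNF => /eqP ->. Qed.
Lemma pos_neq2 r (x y : pos r) : x.1.2 != y.1.2 -> (x == y) = false.
Proof. by apply: contraNF => /eqP ->. Qed.

End ModB.
Import ModB.

Module ModH.
Set Default Proof Using "All".

Section H.
Variables (VS VT : finType) (r : nat) (src : 'I_r -> VS) (tgt : 'I_r -> VT)
          (mS : VS -> nat) (mT : VT -> nat).
Local Notation offT := (off_tgt src tgt mS).
Local Notation offS := (off_src src tgt mT).
Local Notation DT := (Dtgt src tgt mS mT).
Local Notation DS := (Dsrc src tgt mS mT).
Local Notation phT := (phi_tgt src tgt mS).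
Local Notation phS := (phi_src src tgt mT).

Variables (a : VT) (i j e : nat) (D : {fset pos r}) (kP kQ : 'I_r).
Hypotheses (hje : j < e) (hi : i.+1 < mT a) (he : e < cols_tgt src tgt mS a)
  (hrect : forall p q, i <= p <= i.+1 -> j <= q <= e ->
     DT a D (p, q) = ((p, q) \in [:: (i.+1, j); (i, e); (i.+1, e)]))
  (ekP : tgt kP = a) (bP : offT kP <= j < offT kP + mS (src kP))
  (ekQ : tgt kQ = a) (bQ : offT kQ <= e < offT kQ + mS (src kQ)).

Let P : pos r := (i, j - offT kP, kP).
Let Q : pos r := (i.+1, e - offT kQ, kQ).
Let D' := ((D `|` [fset P]) `\ Q)%fset.

Lemma hP : phT a (i, j) = Some P.
Proof. by rewrite -ekP phiT_eq. Qed.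
Lemma hQ : phT a (i.+1, e) = Some Q.
Proof. by rewrite -ekQ phiT_eq. Qed.
Lemma hPS : phS (src kP) (offS kP + i, j - offT kP) = Some P.
Proof. rewrite phiS_eq ?addKn //; rewrite ekP; lia. Qed.
Lemma hQS : phS (src kQ) (offS kQ + i.+1, e - offT kQ) = Some Q.
Proof. rewrite phiS_eq ?addKn //; rewrite ekQ; lia. Qed.

Lemma r_ij1 : DT a D (i.+1, j).
Proof. rewrite hrect; [rewrite !inE !xpair_eqE; lia | lia | lia]. Qed.
Lemma r_ie : DT a D (i, e).
Proof. rewrite hrect; [rewrite !inE !xpair_eqE; lia | lia | lia]. Qed.
Lemma r_i1e : DT a D (i.+1, e).
Proof. rewrite hrect; [rewrite !inE !xpair_eqE; lia | lia | lia]. Qed.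
Lemma r_ij : ~~ DT a D (i, j).
Proof. rewrite hrect; [rewrite !inE !xpair_eqE; lia | lia | lia]. Qed.
Lemma r_row_i q : j <= q < e -> ~~ DT a D (i, q).
Proof. move=> h; rewrite hrect; [rewrite !inE !xpair_eqE; lia | lia | lia]. Qed.
Lemma r_row_i1 q : j < q < e -> ~~ DT a D (i.+1, q).
Proof. move=> h; rewrite hrect; [rewrite !inE !xpair_eqE; lia | lia | lia]. Qed.

Lemma PnD : P \notin D.
Proof. by have := r_ij; rewrite (DT_at _ hP) //; lia. Qed.
Lemma QD : Q \in D.
Proof. by have := r_i1e; rewrite (DT_at _ hQ). Qed.

Lemma DT_e_D' : ~~ DT a D' (i.+1, e).
Proof. by rewrite (DT_at _ hQ) // !inE eqxx. Qed.

Lemma H1_T n : ~ has_diag_chain (DT a D) n -> ~ has_diag_chain (DT a D') n.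
Proof.
move=> hD hc; apply: hD; apply: (chain_replace (x0 := (i, j)) hc).
  move=> z hz hne; apply: (modT_l hz); apply/eqP => ez.
  by have [_ ez'] := phT_inj ez hP; rewrite ez' eqxx in hne.
move=> c1 c2 hp hT _.
have [hb ha _ hc2] := chain_split hp; have [T1 _ T2] := all_split hT.
case: (boolP (has (fun z : nat * nat => z.1 == i.+1) c2)) => [/hasP [[p0 q0] hz0 /= /eqP ez0] | hn].
- subst p0.
  have hq0 : e < q0.
    have := ha _ hz0; rewrite /ltc /= => /andP[_ hjq].
    case: (ltngtP q0 e) => // [lt|eq].
      have := r_row_i1 (q := q0); rewrite (modT_l (T2 _ hz0)); first by move=> /(_ _) /negP; lia.
      by apply/eqP => /(phT_inj hP) [_ [_ ?]]; lia.
    by have := T2 _ hz0; rewrite eq (negbTE DT_e_D').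
  exists (i, e); split; first exact: r_ie.
    by move=> z /hb; rewrite /ltc /=; lia.
  move=> z hz; have := ha _ hz; rewrite /ltc /= => /andP[h1 h2].
  case: (hc2 _ _ hz0 hz) => [<- | | ]; rewrite /ltc /=; lia.
- exists (i.+1, j); split; first exact: r_ij1.
    by move=> z /hb; rewrite /ltc /=; lia.
  move=> z hz; have := ha _ hz; rewrite /ltc /= => /andP[h1 h2].
  have : z.1 != i.+1 by apply: contra hn => h; apply/hasP; exists z.
  rewrite /ltc /=; lia.
Qed.


Lemma H1_S n : ~ has_diag_chain (DS (src kP) D) n -> ~ has_diag_chain (DS (src kP) D') n.
Proof.
move=> hD hc; apply: hD; apply: (chain_replace (x0 := (offS kP + i, j - offT kP)) hc).
  move=> z hz hne; apply: (modS_l hz); apply/eqP => ez.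
  by have [_ ez'] := phS_inj ez hPS; rewrite ez' eqxx in hne.
move=> c1 c2 hp hT _.
have [hb ha _ hc2] := chain_split hp; have [T1 _ T2] := all_split hT.
case: (boolP (has (fun z : nat * nat => z.1 == offS kP + i.+1) c2)) => [/hasP [[p0 q0] hz0 /= /eqP ez0] | hn].
- subst p0.
  have := T2 _ hz0 => /DS_some [k [c [ek ep hcc hq hin]]].
  have ekk : k = kP.
    apply: (blockS_uniq (tgt := tgt) (mT := mT) (p := offS kP + i.+1) ek); first lia.
    rewrite ekP; lia.
  subst k; have ec : c = i.+1 by lia.
  subst c.
  have hq0 : e < offT kP + q0.
    have := ha _ hz0; rewrite /ltc /= => /andP[_ hjq].
    have hw' : DT a D' (i.+1, offT kP + q0) by rewrite -ekP DT_pos // ekP.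
    case: (ltngtP (offT kP + q0) e) => // [lt|eq].
      have := r_row_i1 (q := offT kP + q0); rewrite (modT_l hw'); first by move=> /(_ _) /negP; lia.
      by apply/eqP => /(phT_inj hP) [_ [_ ?]]; lia.
    by move: hw'; rewrite eq (negbTE DT_e_D').
  exists (offS kP + i, e - offT kP); split.
  + rewrite DS_pos; [ | by rewrite ekP; lia | lia].
    rewrite -(DT_pos (src:=src) (tgt:=tgt) (mS:=mS) (mT:=mT) (k:=kP) (p:=i) (c:=e - offT kP) D); [ | by rewrite ekP; lia | lia].
    rewrite ekP (_ : offT kP + (e - offT kP) = e); [exact: r_ie | lia].
  + by move=> z /hb; rewrite /ltc /=; lia.
  + move=> z hz; have := ha _ hz; rewrite /ltc /= => /andP[h1 h2].
    case: (hc2 _ _ hz0 hz) => [<- | | ]; rewrite /ltc /=; lia.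
- exists (offS kP + i.+1, j - offT kP); split.
  + rewrite DS_pos; [ | by rewrite ekP; lia | lia].
    rewrite -(DT_pos (src:=src) (tgt:=tgt) (mS:=mS) (mT:=mT) (k:=kP) (p:=i.+1) (c:=j - offT kP) D); [ | by rewrite ekP; lia | lia].
    rewrite ekP (_ : offT kP + (j - offT kP) = j); [exact: r_ij1 | lia].
  + by move=> z /hb; rewrite /ltc /=; lia.
  + move=> z hz; have := ha _ hz; rewrite /ltc /= => /andP[h1 h2].
    have : z.1 != offS kP + i.+1 by apply: contra hn => h; apply/hasP; exists z.
    rewrite /ltc /=; lia.
Qed.


Lemma H3_T n : ~ has_diag_chain (DT a D') n -> ~ has_diag_chain (DT a D) n.
Proof.
move=> hD hc; apply: hD; apply: (chain_replace (x0 := (i.+1, e)) hc).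
  move=> z hz hne; apply: (modT_r _ hz); apply/eqP => ez.
  by have [_ ez'] := phT_inj ez hQ; rewrite ez' eqxx in hne.
move=> c1 c2 hp hT _.
have [hb ha hc1 _] := chain_split hp; have [T1 _ T2] := all_split hT.
case: (boolP (has (fun z : nat * nat => z.1 == i) c1)) => [/hasP [[p0 q0] hz0 /= /eqP ez0] | hn].
- subst p0.
  have hq0 : q0 < j.
    have := hb _ hz0; rewrite /ltc /= => /andP[_ hqe].
    case: (leqP j q0) => // hjq.
    by have := r_row_i (q := q0); rewrite T1 //; move=> /(_ _) /negP; lia.
  exists (i.+1, j); split.
  + apply: (modT_r _ r_ij1); apply/eqP => /(phT_inj hQ) [_ [?]]; lia.
  + move=> z hz; have := hb _ hz; rewrite /ltc /= => /andP[h1 h2].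
    case: (hc1 _ _ hz0 hz) => [<- | | ]; rewrite /ltc /=; lia.
  + by move=> z /ha; rewrite /ltc /=; lia.
- exists (i, e); split.
  + apply: (modT_r _ r_ie); apply/eqP => /(phT_inj hQ) [_ [?]]; lia.
  + move=> z hz; have := hb _ hz; rewrite /ltc /= => /andP[h1 h2].
    have : z.1 != i by apply: contra hn => h; apply/hasP; exists z.
    rewrite /ltc /=; lia.
  + by move=> z /ha; rewrite /ltc /=; lia.
Qed.

Lemma H3_S n : ~ has_diag_chain (DS (src kQ) D') n -> ~ has_diag_chain (DS (src kQ) D) n.
Proof.
move=> hD hc; apply: hD; apply: (chain_replace (x0 := (offS kQ + i.+1, e - offT kQ)) hc).
  move=> z hz hne; apply: (modS_r _ hz); apply/eqP => ez.
  by have [_ ez'] := phS_inj ez hQS; rewrite ez' eqxx in hne.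
move=> c1 c2 hp hT _.
have [hb ha hc1 _] := chain_split hp; have [T1 _ T2] := all_split hT.
case: (boolP (has (fun z : nat * nat => z.1 == offS kQ + i) c1)) => [/hasP [[p0 q0] hz0 /= /eqP ez0] | hn].
- subst p0.
  have := hb _ hz0; rewrite /ltc /= => /andP[_ hqe].
  have := T1 _ hz0 => /DS_some [k [c [ek ep hcc hq hin]]].
  have ekk : k = kQ.
    apply: (blockS_uniq (tgt := tgt) (mT := mT) (p := offS kQ + i) ek); first lia.
    rewrite ekQ; lia.
  subst k; have ec : c = i by lia.
  subst c.
  have hw : DT a D (i, offT kQ + q0).
    by rewrite -ekQ DT_pos // ekQ; lia.
  have hq0 : offT kQ + q0 < j.
    case: (leqP j (offT kQ + q0)) => // hjq.
    by have := r_row_i (q := offT kQ + q0); rewrite hw; move=> /(_ _) /negP; lia.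
  exists (offS kQ + i.+1, j - offT kQ); split.
  + apply: modS_r.
      rewrite DS_pos; [ | by rewrite ekQ; lia | lia].
      rewrite -(DT_pos (src:=src) (tgt:=tgt) (mS:=mS) (mT:=mT) (k:=kQ) (p:=i.+1) (c:=j - offT kQ) D); [ | by rewrite ekQ; lia | lia].
      rewrite ekQ (_ : offT kQ + (j - offT kQ) = j); [exact: r_ij1 | lia].
    apply/eqP => /(phS_inj hQS) [_ [?]]; lia.
  + move=> z hz; have := hb _ hz; rewrite /ltc /= => /andP[h1 h2].
    case: (hc1 _ _ hz0 hz) => [<- | | ]; rewrite /ltc /=; lia.
  + by move=> z /ha; rewrite /ltc /=; lia.
- exists (offS kQ + i, e - offT kQ); split.
  + apply: modS_r.
      rewrite DS_pos; [ | by rewrite ekQ; lia | lia].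
      rewrite -(DT_pos (src:=src) (tgt:=tgt) (mS:=mS) (mT:=mT) (k:=kQ) (p:=i) (c:=e - offT kQ) D); [ | by rewrite ekQ; lia | lia].
      rewrite ekQ (_ : offT kQ + (e - offT kQ) = e); [exact: r_ie | lia].
    apply/eqP => /(phS_inj hQS) [_ [?]]; lia.
  + move=> z hz; have := hb _ hz; rewrite /ltc /= => /andP[h1 h2].
    have : z.1 != offS kQ + i by apply: contra hn => h; apply/hasP; exists z.
    rewrite /ltc /=; lia.
  + by move=> z /ha; rewrite /ltc /=; lia.
Qed.

Variables (uS : VS -> nat) (uT : VT -> nat).
Local Notation comp := (u_compatible src tgt mS mT uS uT).

Lemma H1 : comp D -> comp D'.
Proof.
case=> hL hT hS; split.
- move=> X; rewrite !inE => /andP[_ /orP[/hL //|/eqP ->]].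
  rewrite /inL /= ekP; lia.
- move=> a'; case: (a' =P a) => [->|ne]; first exact: H1_T (hT a).
  move=> hc; apply: (hT a'); apply: chain_mono hc => z hz; apply: (modT_l hz).
  by apply/eqP => ez; have [ea _] := phT_inj ez hP; exact: ne ea.
- move=> b; case: (b =P src kP) => [->|ne]; first exact: H1_S (hS _).
  move=> hc; apply: (hS b); apply: chain_mono hc => z hz; apply: (modS_l hz).
  by apply/eqP => ez; have [ea _] := phS_inj ez hPS; exact: ne ea.
Qed.

Lemma H3 : comp D' -> comp D.
Proof.
case=> hL hT hS; split.
- move=> X hX; case: (X =P Q) => [->|ne].
    rewrite /inL /= ekQ; lia.
  by apply: hL; rewrite !inE hX; apply/andP; split => //; apply/eqP.
- move=> a'; case: (a' =P a) => [->|ne]; first exact: H3_T (hT a).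
  move=> hc; apply: (hT a'); apply: chain_mono hc => z hz; apply: (modT_r _ hz).
  by apply/eqP => ez; have [ea _] := phT_inj ez hQ; exact: ne ea.
- move=> b; case: (b =P src kQ) => [->|ne]; first exact: H3_S (hS _).
  move=> hc; apply: (hS b); apply: chain_mono hc => z hz; apply: (modS_r _ hz).
  by apply/eqP => ez; have [ea _] := phS_inj ez hQS; exact: ne ea.
Qed.

End H.

End ModH.
Import ModH.

Module ModM.

Ltac clean := repeat match goal with
  | H : is_true (~~ (?x == _)) |- _ => lazymatch type of x with nat => fail | _ => clear H end
  | H : is_true (?x == _) |- _ => lazymatch type of x with nat => fail | _ => clear H end
  | H : (?x == _) = _ |- _ => lazymatch type of x with nat => fail | _ => clear H end
  | H : is_true (_ \in _) |- _ => clear H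
  | H : is_true (_ \notin _) |- _ => clear H
  | H : u_compatible _ _ _ _ _ _ _ |- _ => clear H
  | H : concurrent_vertex_map _ _ _ _ _ _ _ |- _ => clear H
  | H : _ = Some _ |- _ => clear H
  | H : forall _, _ |- _ => clear H
  | H : ~ _ |- _ => clear H
  | H : is_true (Dtgt _ _ _ _ _ _ _) |- _ => clear H
  | H : is_true (Dsrc _ _ _ _ _ _ _) |- _ => clear H
  | H : is_true (~~ Dtgt _ _ _ _ _ _ _) |- _ => clear H
  | H : is_true (~~ Dsrc _ _ _ _ _ _ _) |- _ => clear H
  | H : has_diag_chain _ _ |- _ => clear H
  end.
Ltac slia := clean; lia.

Section M.
Variables (VS VT : finType) (r : nat) (src : 'I_r -> VS) (tgt : 'I_r -> VT)
          (mS : VS -> nat) (mT : VT -> nat) (uS : VS -> nat) (uT : VT -> nat).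
Local Notation offT := (off_tgt src tgt mS).
Local Notation offS := (off_src src tgt mT).
Local Notation DT := (Dtgt src tgt mS mT).
Local Notation DS := (Dsrc src tgt mS mT).
Local Notation phT := (phi_tgt src tgt mS).
Local Notation phS := (phi_src src tgt mT).
Local Notation comp := (u_compatible src tgt mS mT uS uT).
Local Notation cvm := (concurrent_vertex_map src tgt mS mT uS uT).

Variables (a : VT) (i j e : nat) (C : {fset pos r}) (kP kQ : 'I_r).
Hypotheses (hje : j < e) (hi : i.+1 < mT a) (he : e < cols_tgt src tgt mS a)
  (hrect : forall p q, i <= p <= i.+1 -> j <= q <= e ->
     DT a C (p, q) = ((p, q) \in [:: (i.+1, j); (i, e); (i.+1, e)]))
  (ekP : tgt kP = a) (bP : offT kP <= j < offT kP + mS (src kP))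
  (ekQ : tgt kQ = a) (bQ : offT kQ <= e < offT kQ + mS (src kQ)).

Local Notation P := ((i, j - offT kP, kP) : pos r).
Local Notation Q := ((i.+1, e - offT kQ, kQ) : pos r).
Local Notation C' := ((C `|` [fset P]) `\ Q)%fset.

Let hP : phT a (i, j) = Some P.
Proof. by rewrite -ekP phiT_eq. Qed.
Let hQ : phT a (i.+1, e) = Some Q.
Proof. by rewrite -ekQ phiT_eq. Qed.
Let hPS : phS (src kP) (offS kP + i, j - offT kP) = Some P.
Proof. rewrite phiS_eq ?addKn //; rewrite ekP; lia. Qed.
Let hQS : phS (src kQ) (offS kQ + i.+1, e - offT kQ) = Some Q.
Proof. rewrite phiS_eq ?addKn //; rewrite ekQ; lia. Qed.

Let r_ij1 : DT a C (i.+1, j).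
Proof. rewrite hrect; [rewrite !inE !xpair_eqE; lia | lia | lia]. Qed.
Let r_ie : DT a C (i, e).
Proof. rewrite hrect; [rewrite !inE !xpair_eqE; lia | lia | lia]. Qed.
Let r_i1e : DT a C (i.+1, e).
Proof. rewrite hrect; [rewrite !inE !xpair_eqE; lia | lia | lia]. Qed.
Let r_ij : ~~ DT a C (i, j).
Proof. rewrite hrect; [rewrite !inE !xpair_eqE; lia | lia | lia]. Qed.
Let r_row_i q : j <= q < e -> ~~ DT a C (i, q).
Proof. move=> h; rewrite hrect; [rewrite !inE !xpair_eqE; lia | lia | lia]. Qed.
Let r_row_i1 q : j < q < e -> ~~ DT a C (i.+1, q).
Proof. move=> h; rewrite hrect; [rewrite !inE !xpair_eqE; lia | lia | lia]. Qed.

Let PnC : P \notin C.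
Proof. by have := r_ij; rewrite (DT_at _ hP) //; lia. Qed.
Let QC : Q \in C.
Proof. by have := r_i1e; rewrite (DT_at _ hQ). Qed.
Let PQ : (P == Q) = false.
Proof. by apply/eqP => -[]; lia. Qed.

Lemma HM : cvm C -> cvm C'.
Proof.
move=> hC; apply: cvm_intro; first exact: (H1 hje hi he hrect ekP bP ekQ bQ hC.1).
move=> R hR hcR.
case: (eqVneq R Q) => [eRQ | nRQ].
  subst R; apply: (cvm_max hC PnC); suff <- : (C' `|` [fset Q] = C `|` [fset P])%fset by [].
  apply/fsetP => x; rewrite !inE; case: (eqVneq x Q) => [->|]; first by rewrite QC.
  by rewrite /= orbF.
have RnC : R \notin C.
  by apply: contra hR => hRC; rewrite !inE hRC nRQ.
have RnP : R != P.
  by apply: contraNneq hR => ->; rewrite !inE eqxx PQ /= ?orbT.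
have hLR : inL src tgt mS mT R by case: hcR => hL _ _; apply: hL; rewrite !inE eqxx ?orbT.
case: R hR hcR nRQ RnC RnP hLR => [[p0 c0] k0] hR hcR nRQ RnC RnP /andP[hp0 hc0].
have [w ew] : exists w, w = offT k0 + c0 by eexists.
have ec0 : c0 = w - offT k0 by slia.
have hw0 : offT k0 <= w by slia.
subst c0; clear ew.
have hb0 : offT k0 <= w < offT k0 + mS (src k0) by slia.
have hRw : phT (tgt k0) (p0, w) = Some (p0, w - offT k0, k0) by rewrite phiT_eq.
case hin: [&& tgt k0 == a, i <= p0 <= i.+1 & j <= w <= e]; last first.
  have hrect' : forall p q, i <= p <= i.+1 -> j <= q <= e ->
      DT a (C `|` [fset (p0, w - offT k0, k0)])%fset (p, q) = ((p, q) \in [:: (i.+1, j); (i, e); (i.+1, e)]).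
    move=> p q h1 h2; rewrite DT_add_no; first exact: hrect.
    apply/eqP => /phiT_Some [k [ek hk [e1 e2 e3]]]; subst p0 k0.
    move: hin; rewrite ek eqxx /=; slia.
  have := H3 (uS:=uS) (uT:=uT) hje hi he hrect' ekP bP ekQ bQ.
  have -> : (((C `|` [fset (p0, w - offT k0, k0)]) `|` [fset P]) `\ Q = C' `|` [fset (p0, w - offT k0, k0)])%fset.
    apply/fsetP => x; rewrite !inE; case: (eqVneq x (p0, w - offT k0, k0)) => [->|_]; first by rewrite nRQ /= !orbT.
    by rewrite /= !orbF.
  by move=> /(_ hcR); apply: cvm_max hC RnC.
move/and3P: hin => [/eqP ek0 hp0b hwb].
have hRa : phT a (p0, w) = Some (p0, w - offT k0, k0) by rewrite -ek0.
have hCf : ~~ DT a C (p0, w) by rewrite (DT_at _ hRa) ?RnC // -ek0.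
have hnij : (p0 != i) || (w != j).
  rewrite -negb_and; apply: contra RnP => /andP[/eqP e1 /eqP e2]; subst p0 w.
  by move: hRa; rewrite hP => -[e1 e2]; rewrite -e1 -e2.
move: hCf; rewrite hrect // !inE !xpair_eqE => hCf.
have hw : j < w < e by slia.
have [ep0|ep0] : p0 = i \/ p0 = i.+1 by slia.
- subst p0.
  pose S1 : pos r := (i.+1, w - offT k0, k0).
  have hS1 : phT a (i.+1, w) = Some S1 by rewrite -ek0 phiT_eq.
  have S1nC : S1 \notin C.
    by have := @r_row_i1 w; rewrite (DT_at _ hS1) // => h; apply: h; slia.
  pose F2 := (((C `|` [fset S1]) `|` [fset (i, w - offT k0, k0)]) `\ Q)%fset.
  have hjw : j < w by slia.
  have hwe : w < e by slia.
  have hwc : w < cols_tgt src tgt mS a by slia.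
  have hrect2 : forall p q, i <= p <= i.+1 -> j <= q <= w ->
      DT a F2 (p, q) = ((p, q) \in [:: (i.+1, j); (i, w); (i.+1, w)]).
    move=> p q h1 h2; rewrite /F2 (DT_rem _ _ _ hQ).
    rewrite (DT_add _ _ hRa); last by rewrite /=; slia.
    rewrite (DT_add _ _ hS1) //.
    rewrite hrect; [|slia|slia].
    rewrite !inE !xpair_eqE; slia.
  have hrect3 : forall p q, i <= p <= i.+1 -> w <= q <= e ->
      DT a (C `|` [fset S1])%fset (p, q) = ((p, q) \in [:: (i.+1, w); (i, e); (i.+1, e)]).
    move=> p q h1 h2; rewrite (DT_add _ _ hS1) //.
    rewrite hrect; [|slia|slia].
    rewrite !inE !xpair_eqE; slia.
  have dSP : ((i.+1, w - offT k0, k0) == P) = false by apply: pos_neq1 => /=; slia.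
  have dSR : ((i.+1, w - offT k0, k0) == (i, w - offT k0, k0)) = false by apply: pos_neq1 => /=; slia.
  have S1nC' : ((i.+1, w - offT k0, k0) \in C) = false by apply/negbTE.
  have c2 : comp F2.
    apply: (H3 (uS:=uS) (uT:=uT) hjw hi hwc hrect2 ekP bP ek0 hb0).
    suff -> : (((F2 `|` [fset P]) `\ (i.+1, w - offT k0, k0)) = C' `|` [fset (i, w - offT k0, k0)])%fset by [].
    apply/fsetP => x; rewrite /F2 /S1 !inE.
    case: (eqVneq x (i.+1, w - offT k0, k0)) => [->|_] /=.
      by rewrite S1nC' dSP dSR /= ?andbF.
    case: (eqVneq x P) => [->|_] /=.
      by rewrite PQ /= ?orbT.
    case: (eqVneq x (i, w - offT k0, k0)) => [->|_] /=.
      by rewrite nRQ /= ?orbT.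
    by rewrite ?orbF.
  have c3 := H3 (uS:=uS) (uT:=uT) hwe hi he hrect3 ek0 hb0 ekQ bQ c2.
  exact: cvm_max hC S1nC c3.
subst p0.
pose Y := (((C `|` [fset (i.+1, w - offT k0, k0)]) `|` [fset P]) `\ Q)%fset.
have hY : comp Y.
  suff -> : Y = (C' `|` [fset (i.+1, w - offT k0, k0)])%fset by [].
  apply/fsetP => x; rewrite /Y !inE; case: (eqVneq x (i.+1, w - offT k0, k0)) => [->|_]; first by rewrite nRQ /= !orbT.
  by rewrite /= !orbF.
apply: (cvm_max hC RnC).
case: (hC) => [[hL hT hS] _].
split.
- move=> X; rewrite !inE => /orP[/hL //|/eqP ->]; by rewrite /inL /= hp0 hc0.
- move=> a'; case: (eqVneq a' a) => [->|na].
  + move=> /chainE [c [hs hall hp]].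
    case: (boolP ((i.+1, w) \in c)) => hRin; last first.
      apply: (hT a); apply: (chain_of hp _ hs); apply/allP => z hz.
      have := allP hall z hz; rewrite (DT_add _ _ hRa); last by rewrite /=; slia.
      by case/orP => // /eqP ez; move: hRin; rewrite -ez hz.
    case: (boolP ((i.+1, e) \in c)) => hQin; last first.
      case: hY => _ hYT _; apply: (hYT a); apply: (chain_of hp _ hs); apply/allP => z hz.
      apply: (modT_r _ (allP hall z hz)); apply/eqP => ez; have [_ ez'] := phT_inj ez hQ.
      by move: hQin; rewrite -ez' hz.
    by have := same_row hp hRin hQin erefl => -[]; slia.
  + move=> hc; case: hY => _ hYT _; apply: (hYT a'); apply: chain_mono hc => z hz.
    apply: (modT_r _ hz); apply/eqP => ez; have [ea _] := phT_inj ez hQ.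
    by rewrite ea eqxx in na.
- move=> b; case: (eqVneq b (src kQ)) => [->|nb]; last first.
    move=> hc; case: hY => _ _ hYS; apply: (hYS b); apply: chain_mono hc => z hz.
    apply: (modS_r _ hz); apply/eqP => ez; have [eb _] := phS_inj ez hQS.
    by rewrite eb eqxx in nb.
  move=> hc; case: hY => _ _ hYS; apply: (hYS (src kQ)).
  apply: (chain_replace (x0 := (offS kQ + i.+1, e - offT kQ)) hc).
    move=> z hz hne; apply: (modS_r _ hz); apply/eqP => ez.
    by have [_ ez'] := phS_inj ez hQS; rewrite ez' eqxx in hne.
  move=> c1 c2 hp hT' hs.
  have [hb ha hc1 _] := chain_split hp; have [T1 _ T2] := all_split hT'.
  case: (boolP (has (fun z : nat * nat => z.1 == offS kQ + i) c1)) => [/hasP [[p1 q1] hz1 /= /eqP ez1] | hn].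
  + subst p1; exfalso.
    have := hb _ hz1; rewrite /ltc /= => /andP[_ hqe].
    have := T1 _ hz1 => /DS_some [k [c [ek ep hcc hq hin]]].
    have ekk : k = kQ.
      apply: (blockS_uniq (tgt := tgt) (mT := mT) (p := offS kQ + i) ek); first slia.
      rewrite ekQ; slia.
    subst k; have ec : c = i by slia.
    subst c.
    move: hin; rewrite !inE => /orP[hin|/eqP ee]; last by move: ee => -[]; slia.
    have hw1 : DT a C (i, offT kQ + q1).
      by rewrite -ekQ DT_pos //; rewrite ?ekQ; slia.
    have hq1 : offT kQ + q1 < j.
      case: (leqP j (offT kQ + q1)) => // hjq.
      by have := r_row_i (q := offT kQ + q1); rewrite hw1; move=> /(_ _) /negP; slia.
    have ek0Q : k0 = kQ.
      have ett : tgt k0 = tgt kQ by rewrite ek0 ekQ.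
      have bw : offT kQ <= w < offT kQ + mS (src kQ) by slia.
      exact: (blockT_uniq ett hb0 bw).
    subst k0.
    have hRS : phS (src kQ) (offS kQ + i.+1, w - offT kQ) = Some (i.+1, w - offT kQ, kQ).
      by rewrite phiS_eq ?addKn //; rewrite ekQ; slia.
    have hx0 : (offS kQ + i.+1, e - offT kQ) \in c1 ++ (offS kQ + i.+1, e - offT kQ) :: c2.
      by rewrite mem_cat inE eqxx orbT.
    case: (boolP ((offS kQ + i.+1, w - offT kQ) \in c1 ++ (offS kQ + i.+1, e - offT kQ) :: c2)) => hRin.
      by have := same_row hp hRin hx0 erefl => -[]; slia.
    apply: (hS (src kQ)); apply: (chain_of hp _ hs); apply/allP => z hz.
    have := allP hT' z hz; rewrite (DS_add _ _ hRS); last by rewrite /=; slia.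
    by case/orP => // /eqP ez; move: hRin; rewrite -ez hz.
  + exists (offS kQ + i, e - offT kQ); split.
    * apply: modS_r.
        apply: (DS_sub (fsubsetUl _ _)).
        rewrite DS_pos; [ | by rewrite ekQ; slia | slia].
        rewrite -(DT_pos (src:=src) (tgt:=tgt) (mS:=mS) (mT:=mT) (k:=kQ) (p:=i) (c:=e - offT kQ) C); [ | by rewrite ekQ; slia | slia].
        rewrite ekQ (_ : offT kQ + (e - offT kQ) = e); [exact: r_ie | slia].
      apply/eqP => /(phS_inj hQS) [_ [?]]; slia.
    * move=> z hz; have := hb _ hz; rewrite /ltc /= => /andP[h1 h2].
      have : z.1 != offS kQ + i by apply: contra hn => h; apply/hasP; exists z.
      rewrite /ltc /=; slia.
    * by move=> z /ha; rewrite /ltc /=; slia.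
Qed.

End M.

End ModM.
Import ModM.

Module ModMI.



Section MI.
Variables (VS VT : finType) (r : nat) (src : 'I_r -> VS) (tgt : 'I_r -> VT)
          (mS : VS -> nat) (mT : VT -> nat) (uS : VS -> nat) (uT : VT -> nat).
Local Notation offT := (off_tgt src tgt mS).
Local Notation offS := (off_src src tgt mT).
Local Notation DT := (Dtgt src tgt mS mT).
Local Notation DS := (Dsrc src tgt mS mT).
Local Notation phT := (phi_tgt src tgt mS).
Local Notation phS := (phi_src src tgt mT).
Local Notation comp := (u_compatible src tgt mS mT uS uT).
Local Notation cvm := (concurrent_vertex_map src tgt mS mT uS uT).

Variables (a : VT) (i j e : nat) (D : {fset pos r}) (kP kQ : 'I_r).
Hypotheses (hje : j < e) (hi : i.+1 < mT a) (he : e < cols_tgt src tgt mS a)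
  (hrect : forall p q, i <= p <= i.+1 -> j <= q <= e ->
     DT a D (p, q) = ((p, q) \in [:: (i.+1, j); (i, e); (i.+1, e)]))
  (ekP : tgt kP = a) (bP : offT kP <= j < offT kP + mS (src kP))
  (ekQ : tgt kQ = a) (bQ : offT kQ <= e < offT kQ + mS (src kQ)).

Local Notation P := ((i, j - offT kP, kP) : pos r).
Local Notation Q := ((i.+1, e - offT kQ, kQ) : pos r).
Local Notation C := ((D `|` [fset P]) `\ Q)%fset.

Let hP : phT a (i, j) = Some P.
Proof. by rewrite -ekP phiT_eq. Qed.
Let hQ : phT a (i.+1, e) = Some Q.
Proof. by rewrite -ekQ phiT_eq. Qed.
Let hPS : phS (src kP) (offS kP + i, j - offT kP) = Some P.
Proof. rewrite phiS_eq ?addKn //; rewrite ekP; lia. Qed.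
Let hQS : phS (src kQ) (offS kQ + i.+1, e - offT kQ) = Some Q.
Proof. rewrite phiS_eq ?addKn //; rewrite ekQ; lia. Qed.

Let r_ij1 : DT a D (i.+1, j).
Proof. rewrite hrect; [rewrite !inE !xpair_eqE; lia | lia | lia]. Qed.
Let r_ie : DT a D (i, e).
Proof. rewrite hrect; [rewrite !inE !xpair_eqE; lia | lia | lia]. Qed.
Let r_i1e : DT a D (i.+1, e).
Proof. rewrite hrect; [rewrite !inE !xpair_eqE; lia | lia | lia]. Qed.
Let r_ij : ~~ DT a D (i, j).
Proof. rewrite hrect; [rewrite !inE !xpair_eqE; lia | lia | lia]. Qed.
Let r_row_i q : j <= q < e -> ~~ DT a D (i, q).
Proof. move=> h; rewrite hrect; [rewrite !inE !xpair_eqE; lia | lia | lia]. Qed.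
Let r_row_i1 q : j < q < e -> ~~ DT a D (i.+1, q).
Proof. move=> h; rewrite hrect; [rewrite !inE !xpair_eqE; lia | lia | lia]. Qed.

Let PnD : P \notin D.
Proof. by have := r_ij; rewrite (DT_at _ hP) //; lia. Qed.
Let QD : Q \in D.
Proof. by have := r_i1e; rewrite (DT_at _ hQ). Qed.
Let PQ : (P == Q) = false.
Proof. by apply/eqP => -[]; lia. Qed.


Lemma HMI : cvm C -> cvm D.
Proof.
move=> hC; apply: cvm_intro; first exact: (H3 hje hi he hrect ekP bP ekQ bQ hC.1).
move=> R hR hcR.
case: (eqVneq R P) => [eRP | nRP].
  subst R; have QnC : Q \notin C by rewrite !inE eqxx.
  apply: (cvm_max hC QnC); suff -> : (C `|` [fset Q] = D `|` [fset P])%fset by [].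
  apply/fsetP => x; rewrite !inE; case: (eqVneq x Q) => [->|]; first by rewrite QD /= ?orbT.
  by rewrite /= orbF.
have RnC : R \notin C.
  by rewrite !inE negb_and negbK; apply/orP; right; rewrite negb_or hR.
have nRQ : R != Q.
  by apply: contraNneq hR => ->.
have hLR : inL src tgt mS mT R by case: hcR => hL _ _; apply: hL; rewrite !inE eqxx ?orbT.
case: R hR hcR nRP RnC nRQ hLR => [[p0 c0] k0] hR hcR nRP RnC nRQ /andP[hp0 hc0].
have [w ew] : exists w, w = offT k0 + c0 by eexists.
have ec0 : c0 = w - offT k0 by clear -ew; lia.
have hw0 : offT k0 <= w by clear -ew; lia.
subst c0; clear ew.
have hb0 : offT k0 <= w < offT k0 + mS (src k0) by slia.
have hRw : phT (tgt k0) (p0, w) = Some (p0, w - offT k0, k0) by rewrite phiT_eq.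
case hin: [&& tgt k0 == a, i <= p0 <= i.+1 & j <= w <= e]; last first.
  have hrect' : forall p q, i <= p <= i.+1 -> j <= q <= e ->
      DT a (D `|` [fset (p0, w - offT k0, k0)])%fset (p, q) = ((p, q) \in [:: (i.+1, j); (i, e); (i.+1, e)]).
    move=> p q h1 h2; rewrite DT_add_no; first exact: hrect.
    apply/eqP => /phiT_Some [k [ek hk [e1 e2 e3]]]; subst p0 k0.
    move: hin; rewrite ek eqxx /=; slia.
  have := H1 (uS:=uS) (uT:=uT) hje hi he hrect' ekP bP ekQ bQ hcR.
  have -> : (((D `|` [fset (p0, w - offT k0, k0)]) `|` [fset P]) `\ Q = C `|` [fset (p0, w - offT k0, k0)])%fset.
    apply/fsetP => x; rewrite !inE; case: (eqVneq x (p0, w - offT k0, k0)) => [->|_]; first by rewrite nRQ /= !orbT.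
    by rewrite /= !orbF.
  by apply: cvm_max hC RnC.
move/and3P: hin => [/eqP ek0 hp0b hwb].
have hRa : phT a (p0, w) = Some (p0, w - offT k0, k0) by rewrite -ek0.
have hDf : ~~ DT a D (p0, w) by rewrite (DT_at _ hRa) ?hR // -ek0.
have hnij : (p0 != i) || (w != j).
  rewrite -negb_and; apply: contra nRP => /andP[/eqP e1 /eqP e2]; subst p0 w.
  by move: hRa; rewrite hP => -[e1 e2]; rewrite -e1 -e2.
move: hDf; rewrite hrect // !inE !xpair_eqE => hDf.
have hw : j < w < e by slia.
have hjw : j < w by slia.
have hwe : w < e by slia.
have hwc : w < cols_tgt src tgt mS a by slia.
have [ep0|ep0] : p0 = i.+1 \/ p0 = i by slia.
- subst p0.
  pose T1 : pos r := (i, w - offT k0, k0).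
  have hT1 : phT a (i, w) = Some T1 by rewrite -ek0 phiT_eq.
  have T1nC : T1 \notin C.
    rewrite -(DT_at (mT := mT) C hT1); last by slia.
    apply/negP => hC'; have hD : DT a D (i, w).
      by apply: (modT_l hC'); apply/eqP => /(phT_inj hP) [_ [?]]; slia.
    by have := @r_row_i w; rewrite hD; move=> /(_ _) /negP; slia.
  have hrect1 : forall p q, i <= p <= i.+1 -> w <= q <= e ->
      DT a (D `|` [fset (i.+1, w - offT k0, k0)])%fset (p, q) = ((p, q) \in [:: (i.+1, w); (i, e); (i.+1, e)]).
    move=> p q h1 h2; rewrite (DT_add _ _ hRa) //.
    rewrite hrect; [|slia|slia].
    rewrite !inE !xpair_eqE; slia.
  have c1 := H1 (uS:=uS) (uT:=uT) hwe hi he hrect1 ek0 hb0 ekQ bQ hcR.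
  pose F := (((D `|` [fset (i.+1, w - offT k0, k0)]) `|` [fset (i, w - offT k0, k0)]) `\ Q)%fset.
  have hrect2 : forall p q, i <= p <= i.+1 -> j <= q <= w ->
      DT a F (p, q) = ((p, q) \in [:: (i.+1, j); (i, w); (i.+1, w)]).
    move=> p q h1 h2; rewrite /F (DT_rem _ _ _ hQ).
    rewrite (DT_add _ _ hT1); last by rewrite /=; slia.
    rewrite (DT_add _ _ hRa) //.
    rewrite hrect; [|slia|slia].
    rewrite !inE !xpair_eqE; slia.
  have c2 := H1 (uS:=uS) (uT:=uT) hjw hi hwc hrect2 ekP bP ek0 hb0 c1.
  apply: (cvm_max hC T1nC).
  suff <- : (((F `|` [fset P]) `\ (i.+1, w - offT k0, k0)) = C `|` [fset T1])%fset by [].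
  have dRT : ((i.+1, w - offT k0, k0) == (i, w - offT k0, k0)) = false by apply: pos_neq1 => /=; slia.
  have dTQ : ((i, w - offT k0, k0) == Q) = false by apply: pos_neq1 => /=; slia.
  have dRP : ((i.+1, w - offT k0, k0) == P) = false by apply: pos_neq1 => /=; slia.
  have dPR : (P == (i.+1, w - offT k0, k0)) = false by apply: pos_neq1 => /=; slia.
  have RnD : ((i.+1, w - offT k0, k0) \in D) = false by apply/negbTE.
  apply/fsetP => x; rewrite /F /T1 !inE.
  case: (eqVneq x (i.+1, w - offT k0, k0)) => [->|_] /=.
    by rewrite RnD dRT dRP /= ?andbF.
  case: (eqVneq x P) => [->|_] /=.
    by rewrite PQ /= ?orbT.
  case: (eqVneq x (i, w - offT k0, k0)) => [->|_] /=.
    by rewrite dTQ /= ?orbT.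
  by rewrite ?orbF.
- subst p0.
  have eT : (C `|` [fset (i, w - offT k0, k0)] = ((D `|` [fset (i, w - offT k0, k0)]) `|` [fset P]) `\ Q)%fset.
    apply/fsetP => x; rewrite !inE; case: (eqVneq x (i, w - offT k0, k0)) => [->|_]; first by rewrite nRQ /= !orbT.
    by rewrite /= !orbF.
  apply: (cvm_max hC RnC).
  case: (hC) => [[hL hT hS] _].
  case: (hcR) => [hL' hT' hS'].
  have modl : forall a' z, DT a' (C `|` [fset (i, w - offT k0, k0)])%fset z -> phT a' z != Some P ->
      DT a' (D `|` [fset (i, w - offT k0, k0)])%fset z.
    by move=> a' z; rewrite eT; apply: modT_l.
  have modlS : forall b z, DS b (C `|` [fset (i, w - offT k0, k0)])%fset z -> phS b z != Some P ->
      DS b (D `|` [fset (i, w - offT k0, k0)])%fset z.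
    by move=> b z; rewrite eT; apply: modS_l.
  split.
  + move=> X; rewrite in_fsetU in_fset1 => /orP[/hL //|/eqP ->]; by rewrite /inL /= hp0 hc0.
  + move=> a'; case: (eqVneq a' a) => [->|na].
    * move=> /chainE [c [hs hall hp]].
      case: (boolP ((i, w) \in c)) => hRin; last first.
        apply: (hT a); apply: (chain_of hp _ hs); apply/allP => z hz.
        have := allP hall z hz; rewrite (DT_add _ _ hRa); last by rewrite /=; slia.
        by case/orP => // /eqP ez; move: hRin; rewrite -ez hz.
      case: (boolP ((i, j) \in c)) => hPin; last first.
        apply: (hT' a); apply: (chain_of hp _ hs); apply/allP => z hz.
        apply: (modl _ _ (allP hall z hz)); apply/eqP => ez; have [_ ez'] := phT_inj ez hP.
        by move: hPin; rewrite -ez' hz.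
      by have := same_row hp hRin hPin erefl => -[]; slia.
    * move=> hc; apply: (hT' a'); apply: chain_mono hc => z hz.
      apply: (modl _ _ hz); apply/eqP => ez; have [ea _] := phT_inj ez hP.
      by rewrite ea eqxx in na.
  + move=> b; case: (eqVneq b (src kP)) => [->|nb]; last first.
      move=> hc; apply: (hS' b); apply: chain_mono hc => z hz.
      apply: (modlS _ _ hz); apply/eqP => ez; have [eb _] := phS_inj ez hPS.
      by rewrite eb eqxx in nb.
    move=> hc; apply: (hS' (src kP)).
    apply: (chain_replace (x0 := (offS kP + i, j - offT kP)) hc).
      move=> z hz hne; apply: (modlS _ _ hz); apply/eqP => ez.
      by have [_ ez'] := phS_inj ez hPS; rewrite ez' eqxx in hne.
    move=> c1 c2 hp hT2 hs.
    have [hb ha _ hc2] := chain_split hp; have [T1 _ T2] := all_split hT2.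
    case: (boolP (has (fun z : nat * nat => z.1 == offS kP + i.+1) c2)) => [/hasP [[p1 q1] hz1 /= /eqP ez1] | hn].
    * subst p1; exfalso.
      have := ha _ hz1; rewrite /ltc /= => /andP[_ hqj].
      have := T2 _ hz1 => /DS_some [k [c [ek ep hcc hq hin]]].
      have ekk : k = kP.
        apply: (blockS_uniq (tgt := tgt) (mT := mT) (p := offS kP + i.+1) ek); first slia.
        rewrite ekP; slia.
      subst k; have ec : c = i.+1 by slia.
      subst c.
      move: hin; rewrite in_fsetU in_fset1 => /orP[hin|/eqP ee]; last by move: ee => -[]; slia.
      have hw1 : DT a C (i.+1, offT kP + q1).
        by rewrite -ekP DT_pos //; rewrite ?ekP; slia.
      have hq1 : e < offT kP + q1.
        case: (ltngtP (offT kP + q1) e) => // [lt|eq].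
          have hD1 : DT a D (i.+1, offT kP + q1).
            by apply: (modT_l hw1); apply/eqP => /(phT_inj hP) [_ [?]]; slia.
          by have := @r_row_i1 (offT kP + q1); rewrite hD1; move=> /(_ _) /negP; slia.
        by move: hw1; rewrite eq (DT_at _ hQ) // !inE eqxx.
      have ek0P : k0 = kP.
        have ett : tgt k0 = tgt kP by rewrite ek0 ekP.
        have bw : offT kP <= w < offT kP + mS (src kP) by slia.
        exact: (blockT_uniq ett hb0 bw).
      subst k0.
      have hRS : phS (src kP) (offS kP + i, w - offT kP) = Some (i, w - offT kP, kP).
        by rewrite phiS_eq ?addKn //; rewrite ekP; slia.
      have hx0 : (offS kP + i, j - offT kP) \in c1 ++ (offS kP + i, j - offT kP) :: c2.
        by rewrite mem_cat inE eqxx orbT.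
      case: (boolP ((offS kP + i, w - offT kP) \in c1 ++ (offS kP + i, j - offT kP) :: c2)) => hRin.
        by have := same_row hp hRin hx0 erefl => -[]; slia.
      apply: (hS (src kP)); apply: (chain_of hp _ hs); apply/allP => z hz.
      have := allP hT2 z hz; rewrite (DS_add _ _ hRS); last by rewrite /=; slia.
      by case/orP => // /eqP ez; move: hRin; rewrite -ez hz.
    * exists (offS kP + i.+1, j - offT kP); split.
      -- apply: (DS_sub (fsubsetUl _ _)).
         rewrite DS_pos; [ | by rewrite ekP; slia | slia].
         rewrite -(DT_pos (src:=src) (tgt:=tgt) (mS:=mS) (mT:=mT) (k:=kP) (p:=i.+1) (c:=j - offT kP) D); [ | by rewrite ekP; slia | slia].
         rewrite ekP (_ : offT kP + (j - offT kP) = j); [exact: r_ij1 | slia].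
      -- by move=> z /hb; rewrite /ltc /=; slia.
      -- move=> z hz; have := ha _ hz; rewrite /ltc /= => /andP[h1 h2].
         have : z.1 != offS kP + i.+1 by apply: contra hn => h; apply/hasP; exists z.
         rewrite /ltc /=; slia.
Qed.

End MI.

Unset Default Proof Using.
End ModMI.
Import ModMI.

Module ModO.

Section O.
Variable r : nat.

Lemma ltTE (x y : pos r) : ltT x y =
  [|| (x.2 < y.2)%N, (nat_of_ord x.2 == nat_of_ord y.2) && (x.1.1 < y.1.1) |
      [&& nat_of_ord x.2 == nat_of_ord y.2, x.1.1 == y.1.1 & x.1.2 < y.1.2]].
Proof. by case: x => [[i j] k]; case: y => [[i' j'] k']. Qed.

Lemma ltT_trans : transitive (@ltT r).
Proof. move=> y x z; rewrite !ltTE; lia. Qed.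

Lemma ltT_irr : irreflexive (@ltT r).
Proof. move=> x; rewrite ltTE; lia. Qed.

Lemma ltT_total (x y : pos r) : x != y -> ltT x y || ltT y x.
Proof.
case: x => [[i j] k]; case: y => [[i' j'] k'] ne; rewrite !ltTE /=.
have : [|| i != i', j != j' | nat_of_ord k != nat_of_ord k'].
  apply: contraR ne; rewrite !negb_or !negbK => /and3P[/eqP -> /eqP -> /eqP /val_inj ->]; by [].
lia.
Qed.

Lemma leT_total : total (@leT r).
Proof.
move=> x y; case: (eqVneq x y) => [->|ne]; first by rewrite /leT eqxx.
by rewrite /leT; move: ne; rewrite eq_sym => ne; rewrite (negbTE ne) /=; move: ne; rewrite eq_sym => ne; have := ltT_total ne; case: (ltT x y) => /=; rewrite ?orbT. 
Qed.


Local Notation S X := (sort (@leT r) (X : seq (pos r))).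

Lemma sortS_lt (X : {fset pos r}) : sorted (@ltT r) (S X).
Proof.
have u : uniq (S X) by rewrite sort_uniq; exact: fset_uniq.
have so : sorted (@leT r) (S X) by apply: sort_sorted; exact: leT_total.
move: u so; elim: (S X) => // x s IH /= /andP[nx us] sp.
have sps : sorted (@leT r) s := path_sorted sp.
have := IH us sps; case: s nx sp sps {IH us} => //= y s nx /andP[hxy _] _ ->; rewrite andbT.
move: hxy; rewrite /leT => /orP[/eqP exy|//]; by rewrite exy inE eqxx in nx.
Qed.

Lemma mem_S (X : {fset pos r}) x : (x \in S X) = (x \in X).
Proof. by rewrite mem_sort. Qed.

Lemma sorted_ltT_cat (s1 s2 : seq (pos r)) : sorted (@ltT r) s1 -> sorted (@ltT r) s2 ->
  (forall x y, x \in s1 -> y \in s2 -> ltT x y) -> sorted (@ltT r) (s1 ++ s2).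
Proof.
rewrite !(sorted_pairwise ltT_trans) pairwise_cat => -> -> h; rewrite !andbT.
by apply/allrelP => x y; apply: h.
Qed.

Lemma ltT_map_mod (X : {fset pos r}) P Q : P \notin X -> Q \in X -> ltT P Q ->
  ltT_map ((X `|` [fset P]) `\ Q)%fset X.
Proof.
move=> PnX QX PQ.
set Y := ((X `|` [fset P]) `\ Q)%fset.
have irr := ltT_irr; have tr := ltT_trans.
have nPQ : P != Q by apply: contraTneq PQ => ->; rewrite irr.
pose lo := [seq z <- S X | ltT z Q]; pose hi := [seq z <- S X | ltT Q z].
pose lo' := [seq z <- S Y | ltT z Q]; pose hi' := [seq z <- S Y | ltT Q z].
have slo : sorted (@ltT r) lo by apply: sorted_filter => //; exact: sortS_lt.
have shi : sorted (@ltT r) hi by apply: sorted_filter => //; exact: sortS_lt.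
have slo' : sorted (@ltT r) lo' by apply: sorted_filter => //; exact: sortS_lt.
have shi' : sorted (@ltT r) hi' by apply: sorted_filter => //; exact: sortS_lt.
have tri : forall z, z != Q -> ltT z Q || ltT Q z by move=> z; apply: ltT_total.
have eX : S X = lo ++ Q :: hi.
  apply: (irr_sorted_eq tr irr); first exact: sortS_lt.
    apply: sorted_ltT_cat => //.
      by rewrite /= path_min_sorted //; apply/allP => z; rewrite mem_filter => /andP[].
    move=> x y; rewrite mem_filter => /andP[hx _]; rewrite inE => /orP[/eqP -> //|].
    by rewrite mem_filter => /andP[hy _]; exact: tr hx hy.
  move=> z; rewrite mem_S mem_cat inE !mem_filter !mem_S.
  case: (eqVneq z Q) => [->|nz]; first by rewrite QX !orbT.
  by have := tri z nz; case: (ltT z Q); case: (ltT Q z); case: (z \in X).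
have ehi : hi' = hi.
  apply: (irr_sorted_eq tr irr) => // z; rewrite !mem_filter !mem_S !inE.
  case: (eqVneq z Q) => [->|nz]; first by rewrite irr.
  case: (eqVneq z P) => [->|nzP] /=; last by rewrite orbF.
  by rewrite (negbTE PnX); case: (boolP (ltT Q P)) => // h; have := tr _ _ _ h PQ; rewrite irr.
have eY : S Y = lo' ++ hi'.
  apply: (irr_sorted_eq tr irr); first exact: sortS_lt.
    apply: sorted_ltT_cat => // x y; rewrite !mem_filter => /andP[hx _] /andP[hy _].
    exact: tr hx hy.
  move=> z; rewrite mem_cat !mem_filter.
  case: (eqVneq z Q) => [->|nz]; first by rewrite irr mem_S !inE eqxx.
  by have := tri z nz; case: (ltT z Q); case: (ltT Q z); case: (z \in S Y).
have slo'P : size lo' = (size lo).+1.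
  have u1 : uniq lo' by apply: sorted_uniq slo'.
  have u2 : uniq (P :: lo).
    rewrite /= (sorted_uniq tr irr slo) andbT mem_filter mem_S; by rewrite (negbTE PnX) andbF.
  have pe : perm_eq lo' (P :: lo).
    apply: uniq_perm => // z; rewrite !inE !mem_filter !mem_S !inE.
    case: (eqVneq z P) => [->|nzP] /=; first by rewrite PQ nPQ orbT.
    by rewrite orbF; case: (eqVneq z Q) => [->|_]; rewrite ?irr. 
  by rewrite (perm_size pe).
case/lastP E : lo' slo'P => [//|lo'' x] slo''.
have hx : ltT x Q.
  have : x \in lo' by rewrite E mem_rcons inE eqxx.
  by rewrite mem_filter => /andP[].
exists (size lo), x, Q, hi; split => //.
  rewrite eY E ehi cat_rcons; move: slo''; rewrite size_rcons => -[<-].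
  by rewrite drop_size_cat.
by rewrite eX drop_size_cat.
Qed.

End O.

End ModO.
Import ModO.

Module ModT.

Definition swapP r (x : pos r) : pos r := let: (i, j, k) := x in (j, i, k).

Lemma swapPK r : involutive (@swapP r).
Proof. by case=> [[i j] k]. Qed.

Lemma swapP_inj r : injective (@swapP r).
Proof. exact: inv_inj (@swapPK r). Qed.

Definition trs r (D : {fset pos r}) : {fset pos r} := [fset swapP x | x in D]%fset.

Lemma mem_trs r (D : {fset pos r}) x : (x \in trs D) = (swapP x \in D).
Proof.
by rewrite -{1}(swapPK x) /trs mem_imfset //; exact: swapP_inj.
Qed.

Lemma trsK r : involutive (@trs r).
Proof. by move=> D; apply/fsetP => x; rewrite !mem_trs swapPK. Qed.

Definition swapz (z : nat * nat) := (z.2, z.1).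

Lemma chain_swap (S : pred (nat * nat)) n :
  has_diag_chain S n <-> has_diag_chain (fun z => S (swapz z)) n.
Proof.
have key : forall (S : pred (nat * nat)), has_diag_chain S n -> has_diag_chain (fun z => S (swapz z)) n.
  move=> S' /chainE [c [hs ha hp]]; apply/chainE; exists (map swapz c); split.
  - by rewrite size_map.
  - by rewrite all_map; apply: sub_all ha => z /=; rewrite /swapz /= -surjective_pairing.
  - rewrite pairwise_map; apply: sub_pairwise hp => x y; rewrite /ltc /swapz /= andbC //.
split; first exact: key.
by move=> /key; apply: chain_mono => z; rewrite /swapz /= -surjective_pairing.
Qed.

Section T.
Variables (VS VT : finType) (r : nat) (src : 'I_r -> VS) (tgt : 'I_r -> VT)
          (mS : VS -> nat) (mT : VT -> nat) (uS : VS -> nat) (uT : VT -> nat).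

Lemma phi_swap b p q :
  phi_tgt tgt src mT b (q, p) = omap (@swapP r) (phi_src src tgt mT b (p, q)).
Proof.
rewrite /phi_tgt /phi_src /off_tgt /off_src; by case: pickP.
Qed.

Lemma phi_swap' a p q :
  phi_src tgt src mS a (q, p) = omap (@swapP r) (phi_tgt src tgt mS a (p, q)).
Proof.
rewrite /phi_tgt /phi_src /off_tgt /off_src; by case: pickP.
Qed.

Lemma Dtgt_swap b (D : {fset pos r}) p q :
  Dtgt tgt src mT mS b (trs D) (q, p) = Dsrc src tgt mS mT b D (p, q).
Proof.
rewrite /Dtgt /Dsrc phi_swap.
case: (phi_src src tgt mT b (p, q)) => [X|] /=; last by rewrite !andbF.
by rewrite mem_trs swapPK andbCA.
Qed.

Lemma Dsrc_swap a (D : {fset pos r}) p q :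
  Dsrc tgt src mT mS a (trs D) (q, p) = Dtgt src tgt mS mT a D (p, q).
Proof.
rewrite /Dtgt /Dsrc phi_swap'.
case: (phi_tgt src tgt mS a (p, q)) => [X|] /=; last by rewrite !andbF.
by rewrite mem_trs swapPK andbCA.
Qed.

Lemma comp_swap (D : {fset pos r}) :
  u_compatible src tgt mS mT uS uT D <-> u_compatible tgt src mT mS uT uS (trs D).
Proof.
have eqL : forall x : pos r, inL tgt src mT mS (swapP x) = inL src tgt mS mT x.
  by case=> [[i j] k]; rewrite /inL /= andbC.
split.
- case=> hL hT hS; split.
  + by move=> x; rewrite mem_trs => /hL; rewrite -eqL swapPK.
  + move=> b /chain_swap hc; apply: (hS b); apply: chain_mono hc => z.
    by rewrite /swapz; case: z => p q /=; rewrite Dtgt_swap.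
  + move=> a /chain_swap hc; apply: (hT a); apply: chain_mono hc => z.
    by rewrite /swapz; case: z => p q /=; rewrite Dsrc_swap.
- case=> hL hT hS; split.
  + by move=> x hx; rewrite -eqL; apply: hL; rewrite mem_trs swapPK.
  + move=> a hc; apply: (hS a); apply/chain_swap; apply: chain_mono hc => z.
    by rewrite /swapz; case: z => p q /=; rewrite Dsrc_swap.
  + move=> b hc; apply: (hT b); apply/chain_swap; apply: chain_mono hc => z.
    by rewrite /swapz; case: z => p q /=; rewrite Dtgt_swap.
Qed.

Lemma cvm_swap (D : {fset pos r}) :
  concurrent_vertex_map src tgt mS mT uS uT D -> concurrent_vertex_map tgt src mT mS uT uS (trs D).
Proof.
case=> hc hmax; split; first exact/comp_swap.
move=> E hE hsub; rewrite -(trsK E); congr trs.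
apply: hmax; first by apply/comp_swap; rewrite trsK.
apply/fsubsetP => x hx; rewrite mem_trs; apply: (fsubsetP hsub); by rewrite mem_trs swapPK.
Qed.

Lemma cvm_swap' (D : {fset pos r}) :
  concurrent_vertex_map tgt src mT mS uT uS (trs D) -> concurrent_vertex_map src tgt mS mT uS uT D.
Proof.
case=> hc hmax; split; first exact/comp_swap.
move=> E hE hsub; rewrite -(trsK E) -(trsK D); congr trs.
apply: hmax; first by move/comp_swap: hE.
apply/fsubsetP => x; rewrite !mem_trs => hx; exact: (fsubsetP hsub).
Qed.

End T.

End ModT.
Import ModT.

Module ModF.

Section F.
Variables (VS VT : finType) (r : nat) (src : 'I_r -> VS) (tgt : 'I_r -> VT)
          (mS : VS -> nat) (mT : VT -> nat) (uS : VS -> nat) (uT : VT -> nat).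
Local Notation offT := (off_tgt src tgt mS).
Local Notation offS := (off_src src tgt mT).
Local Notation DT := (Dtgt src tgt mS mT).
Local Notation DS := (Dsrc src tgt mS mT).
Local Notation comp := (u_compatible src tgt mS mT uS uT).
Local Notation cvm := (concurrent_vertex_map src tgt mS mT uS uT).
Local Notation hor := (horizontal_chute src tgt mS mT).
Local Notation ver := (vertical_chute src tgt mS mT).

Lemma hor_params (D D' : {fset pos r}) : hor D D' ->
  exists a i j e kP kQ, [/\ [/\ j < e, i.+1 < mT a, e < cols_tgt src tgt mS a &
     forall p q, i <= p <= i.+1 -> j <= q <= e ->
       DT a D (p, q) = ((p, q) \in [:: (i.+1, j); (i, e); (i.+1, e)])],
    [/\ tgt kP = a, offT kP <= j < offT kP + mS (src kP), tgt kQ = a & offT kQ <= e < offT kQ + mS (src kQ)] &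
    D' = ((D `|` [fset (i, j - offT kP, kP)]) `\ (i.+1, e - offT kQ, kQ))%fset].
Proof.
case=> a [i [j [l [hl hi he hrect [P [Q [hP hQ ->]]]]]]].
have [kP [ekP bP eP]] := phiT_Some hP; have [kQ [ekQ bQ eQ]] := phiT_Some hQ.
exists a, i, j, (j + l - 1), kP, kQ; split => //; last by rewrite eP eQ.
split => //; lia.
Qed.

Lemma hor_comp (D D' : {fset pos r}) : comp D -> hor D D' -> comp D'.
Proof.
move=> hc /hor_params [a [i [j [e [kP [kQ [[hje hi he hrect] [ekP bP ekQ bQ] ->]]]]]]].
exact: (H1 hje hi he hrect ekP bP ekQ bQ hc).
Qed.

Lemma hor_comp_inv (D D' : {fset pos r}) : comp D' -> hor D D' -> comp D.
Proof.
move=> hc /hor_params [a [i [j [e [kP [kQ [[hje hi he hrect] [ekP bP ekQ bQ] eD]]]]]]].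
subst D'; exact: (H3 hje hi he hrect ekP bP ekQ bQ hc).
Qed.

Lemma hor_cvm (D D' : {fset pos r}) : cvm D -> hor D D' -> cvm D'.
Proof.
move=> hc /hor_params [a [i [j [e [kP [kQ [[hje hi he hrect] [ekP bP ekQ bQ] ->]]]]]]].
exact: (HM hje hi he hrect ekP bP ekQ bQ hc).
Qed.

Lemma hor_cvm_inv (D D' : {fset pos r}) : cvm D' -> hor D D' -> cvm D.
Proof.
move=> hc /hor_params [a [i [j [e [kP [kQ [[hje hi he hrect] [ekP bP ekQ bQ] eD]]]]]]].
subst D'; exact: (HMI hje hi he hrect ekP bP ekQ bQ hc).
Qed.

Lemma hor_ord (D D' : {fset pos r}) : hor D D' -> ltT_map D' D.
Proof.
move=> /hor_params [a [i [j [e [kP [kQ [[hje hi he hrect] [ekP bP ekQ bQ] ->]]]]]]].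
apply: ltT_map_mod.
- have hP : phi_tgt src tgt mS a (i, j) = Some (i, j - offT kP, kP) by rewrite -ekP phiT_eq.
  rewrite -(DT_at (mT := mT) D hP); last lia.
  rewrite hrect; [|lia|lia].
  rewrite !inE !xpair_eqE; lia.
- have hQ : phi_tgt src tgt mS a (i.+1, e) = Some (i.+1, e - offT kQ, kQ) by rewrite -ekQ phiT_eq.
  rewrite -(DT_at (mT := mT) D hQ) //.
  rewrite hrect; [|lia|lia].
  rewrite !inE !xpair_eqE; lia.
- rewrite ltTE /=.
  have : kP <= kQ.
    case: (leqP kP kQ) => // lt.
    have := offT_lt src mS (esym (etrans ekP (esym ekQ))) lt; lia.
  lia.
Qed.


Lemma ver_to_hor (D D' : {fset pos r}) : ver D D' -> horizontal_chute tgt src mT mS (trs D) (trs D').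
Proof.
case=> b [i [j [l [hl hi hj hrect [P [Q [hP hQ ->]]]]]]].
exists b, j, i, l; split => //.
- move=> p q h1 h2; rewrite Dtgt_swap hrect; [|lia|lia].
  rewrite !inE !xpair_eqE; lia.
- exists (swapP P), (swapP Q); split.
  + by rewrite phi_swap hP.
  + by rewrite phi_swap hQ.
  + apply/fsetP => x; rewrite mem_trs !inE mem_trs.
    by rewrite -{1}(swapPK P) -{1}(swapPK Q) !(inj_eq (@swapP_inj r)).
Qed.

Lemma ver_ord (D D' : {fset pos r}) : ver D D' -> ltT_map D' D.
Proof.
case=> b [i [j [l [hl hi hj hrect [P [Q [hP hQ ->]]]]]]].
have [kP [ekP bP eP]] := phiS_Some hP; have [kQ [ekQ bQ eQ]] := phiS_Some hQ.
apply: ltT_map_mod.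
- rewrite -(DS_at (mS := mS) D hP); last by move: hj; rewrite /cols_src; lia.
  rewrite hrect; [|lia|lia].
  rewrite !inE !xpair_eqE; lia.
- rewrite -(DS_at (mS := mS) D hQ); last by move: hj; rewrite /cols_src; lia.
  rewrite hrect; [|lia|lia].
  rewrite !inE !xpair_eqE; lia.
- rewrite eP eQ ltTE /=.
  case: (ltngtP kP kQ) => [lt|lt|/val_inj eq]; first by rewrite orTb.
    have := offS_lt tgt mT (esym (etrans ekP (esym ekQ))) lt; lia.
  subst kQ; lia.
Qed.

End F.

Section F2.
Variables (VS VT : finType) (r : nat) (src : 'I_r -> VS) (tgt : 'I_r -> VT)
          (mS : VS -> nat) (mT : VT -> nat) (uS : VS -> nat) (uT : VT -> nat).
Local Notation comp := (u_compatible src tgt mS mT uS uT).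
Local Notation cvm := (concurrent_vertex_map src tgt mS mT uS uT).
Local Notation ver := (vertical_chute src tgt mS mT).

Lemma ver_comp (D D' : {fset pos r}) : comp D -> ver D D' -> comp D'.
Proof.
move=> /comp_swap hc /ver_to_hor hh; apply/comp_swap; exact: hor_comp hc hh.
Qed.

Lemma ver_comp_inv (D D' : {fset pos r}) : comp D' -> ver D D' -> comp D.
Proof.
move=> /comp_swap hc /ver_to_hor hh; apply/comp_swap; exact: hor_comp_inv hc hh.
Qed.

Lemma ver_cvm (D D' : {fset pos r}) : cvm D -> ver D D' -> cvm D'.
Proof.
move=> /cvm_swap hc /ver_to_hor hh; apply: cvm_swap'; exact: hor_cvm hc hh.
Qed.

Lemma ver_cvm_inv (D D' : {fset pos r}) : cvm D' -> ver D D' -> cvm D.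
Proof.
move=> /cvm_swap hc /ver_to_hor hh; apply: cvm_swap'; exact: hor_cvm_inv hc hh.
Qed.

End F2.

End ModF.
Import ModF.

Unset Implicit Arguments.
Local Open Scope fset_scope.

Theorem lemma3p9 (VS VT : finType) (r : nat) (src : 'I_r -> VS) (tgt : 'I_r -> VT)
    (mS : VS -> nat) (mT : VT -> nat) (uS : VS -> nat) (uT : VT -> nat)
    (hT : forall a : VT,
        [/\ 0 < uT a, uT a <= minn (rows_tgt mT a) (cols_tgt src tgt mS a)
          & uT a <= v_tgt src tgt uS a])
    (hS : forall b : VS,
        [/\ 0 < uS b, uS b <= minn (rows_src src tgt mT b) (cols_src mS b)
          & uS b <= v_src src tgt uT b]) :
  let comp := u_compatible src tgt mS mT uS uT in
  let cvm := concurrent_vertex_map src tgt mS mT uS uT in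
  let chute := chute_move src tgt mS mT in
  let ichute := inverse_chute_move src tgt mS mT in
  [/\ (forall D D' : {fset pos r}, comp D -> chute D D' -> comp D'),
      (forall C C' : {fset pos r}, cvm C -> chute C C' -> cvm C' /\ ltT_map C' C),
      (forall D D' : {fset pos r}, comp D -> ichute D D' -> comp D') &
      (forall C C' : {fset pos r}, cvm C -> ichute C C' -> cvm C' /\ ltT_map C C')].
Proof.
move=> comp cvm chute ichute; rewrite /comp /cvm /chute /ichute /inverse_chute_move /chute_move.
split.
- move=> D D' hc [h|h]; [exact: hor_comp hc h | exact: ver_comp hc h].
- move=> C C' hc [h|h]; split; [exact: hor_cvm hc h | exact: hor_ord h | exact: ver_cvm hc h | exact: ver_ord h].
- move=> D D' hc [h|h]; [exact: hor_comp_inv hc h | exact: ver_comp_inv hc h].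
- move=> C C' hc [h|h]; split; [exact: hor_cvm_inv hc h | exact: hor_ord h | exact: ver_cvm_inv hc h | exact: ver_ord h].
Qed.
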